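(* Let $\alpha,\beta\in[0,r]\cap A$ with $\alpha<\beta$, $I=(\alpha,\beta)$, and $x\in\mathbf F_I$ with $\mathrm{fix}(x)\cap I\cap A=\varnothing$. Then the centralizer of $x$ in $\mathbf F_I$ is cyclic.
   Context: Maps act on the right. Fix real $r>0$, a subgroup $\Lambda\neq\{1\}$ of $\mathbb R^*_+$, and an additive subgroup $A\subseteq\mathbb R$ with $r\in A$ and $\lambda A\subseteq A$ for $\lambda\in\Lambda$. $\mathbf F=\mathbf F(r,\Lambda,A)$ is the group of homeomorphisms $x\colon[0,r)\to[0,r)$ that are piecewise affine with finitely many breakpoints, all slopes in $\Lambda$, and all breakpoints and their images in $A$. For a permutation $x$, $\mathrm{fix}(x)$ is its fixed point set and $\mathrm{supp}(x)$ its complement. For $S\subseteq[0,r)$, $\mathbf F_S=\{x\in\mathbf F\mid\mathrm{supp}(x)\subseteq S\}$. *)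

(* Defs.v *)
From Stdlib Require Import Reals Lra List ZArith.
Open Scope R_scope.

Definition inDom (r t : R) : Prop := 0 <= t < r.

Definition cont_on_dom (r : R) (f : R -> R) : Prop :=
  forall t, inDom r t -> limit1_in f (inDom r) (f t) t.

Definition homeo_dom (r : R) (f : R -> R) : Prop :=
  (forall t, inDom r t -> inDom r (f t)) /\
  cont_on_dom r f /\
  exists g : R -> R,
    (forall t, inDom r t -> inDom r (g t)) /\
    cont_on_dom r g /\
    (forall t, inDom r t -> g (f t) = t) /\
    (forall t, inDom r t -> f (g t) = t).

Definition PL_data (r : R) (Lam A : R -> Prop) (f : R -> R) : Prop :=
  exists l : list R,
    (2 <= length l)%nat /\
    nth 0 l 0 = 0 /\ last l 0 = r /\
    Forall A l /\
    (forall i, (S i < length l)%nat -> nth i l 0 < nth (S i) l 0) /\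
    (forall i, (S i < length l)%nat ->
        A (f (nth i l 0)) /\
        exists lam c, Lam lam /\
          forall t, nth i l 0 <= t < nth (S i) l 0 -> f t = lam * t + c).

(* Elements of F(r,Lam,A), represented as maps R -> R that are the identity
   outside [0,r) (so that equality of elements is Leibniz equality). *)
Definition inF (r : R) (Lam A : R -> Prop) (f : R -> R) : Prop :=
  homeo_dom r f /\ PL_data r Lam A f /\
  (forall t, ~ inDom r t -> f t = t).

Definition inF_S (r : R) (Lam A S : R -> Prop) (f : R -> R) : Prop :=
  inF r Lam A f /\ (forall t, inDom r t -> f t <> t -> S t).

Definition rcomp (f g : R -> R) : R -> R := fun t => g (f t). (* right action: f then g *)

Fixpoint iterF (n : nat) (g : R -> R) : R -> R :=
  match n with O => fun t => t | S k => rcomp (iterF k g) g end.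

Definition is_Zpow (g : R -> R) (n : Z) (y : R -> R) : Prop :=
  match n with
  | Z0 => y = (fun t => t)
  | Zpos p => y = iterF (Pos.to_nat p) g
  | Zneg p => rcomp y (iterF (Pos.to_nat p) g) = (fun t => t)
  end.

Definition good_Lam (Lam : R -> Prop) : Prop :=
  (forall l, Lam l -> 0 < l) /\ Lam 1 /\
  (forall a b, Lam a -> Lam b -> Lam (a * b)) /\
  (forall a, Lam a -> Lam (/ a)) /\
  (exists a, Lam a /\ a <> 1).

Definition good_A (r : R) (Lam A : R -> Prop) : Prop :=
  A 0 /\ (forall a b, A a -> A b -> A (a + b)) /\ (forall a, A a -> A (- a)) /\
  A r /\ (forall l a, Lam l -> A a -> A (l * a)).

(* Main.v *)
Require Import Defs.
From Stdlib Require Import Reals Lra Lia List ZArith Classical ClassicalEpsilon FunctionalExtensionality.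
Open Scope R_scope.

Lemma real_ind (P : R -> Prop) (u v : R) :
  u <= v -> P u ->
  (forall t, u <= t < v -> (forall s, u <= s <= t -> P s) ->
     exists e, 0 < e /\ forall s, t <= s < t + e -> P s) ->
  (forall t, u < t <= v -> (forall s, u <= s < t -> P s) -> P t) ->
  forall s, u <= s <= v -> P s.
Proof.
  intros Huv Pu Hr Hl.
  set (E := fun w => u <= w <= v /\ forall s, u <= s <= w -> P s).
  assert (Hb : bound E) by (exists v; intros w [Hw _]; lra).
  assert (He : exists w, E w) by (exists u; split; [lra|intros s Hs; replace s with u by lra; auto]).
  destruct (completeness E Hb He) as [S [HS1 HS2]].
  assert (HuS : u <= S) by (apply HS1; split; [lra|intros s Hs; replace s with u by lra; auto]).
  assert (HSv : S <= v) by (apply HS2; intros w [Hw _]; lra).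
  assert (H1 : forall s, u <= s < S -> P s).
  { intros s Hs. destruct (classic (exists w, E w /\ s < w)) as [[w [[Hw1 Hw2] Hsw]]|Hn].
    - apply Hw2; lra.
    - exfalso. assert (S <= s). { apply HS2. intros w Ew. destruct (Rle_dec w s); auto.
        exfalso; apply Hn; exists w; split; auto; lra. } lra. }
  assert (PS : P S).
  { destruct (Req_dec S u) as [->|Hne]; auto. apply Hl; [lra|auto]. }
  assert (ES : forall s, u <= s <= S -> P s).
  { intros s Hs. destruct (Req_dec s S) as [->|]; auto. apply H1; lra. }
  destruct (Req_dec S v) as [<-|HSv'].
  - exact ES.
  - exfalso. destruct (Hr S ltac:(lra) ES) as [e [He0 He2]].
    set (w := Rmin (S + e/2) v).
    assert (Ew : E w).
    { split. unfold w; unfold Rmin; destruct Rle_dec; lra.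
      intros s Hs. destruct (Rle_dec s S). apply ES; lra. apply He2.
      unfold w in Hs; unfold Rmin in Hs; destruct Rle_dec in Hs; lra. }
    specialize (HS1 w Ew). unfold w in HS1; unfold Rmin in HS1; destruct Rle_dec in HS1; lra.
Qed.

Class Sett := {
  sr : R; sLam : R -> Prop; sA : R -> Prop; salpha : R; sbeta : R;
  hr : 0 < sr;
  Lpos : forall l, sLam l -> 0 < l;
  L1 : sLam 1;
  Lmul : forall a b, sLam a -> sLam b -> sLam (a * b);
  Linv : forall a, sLam a -> sLam (/ a);
  Lne : exists a, sLam a /\ a <> 1;
  A0 : sA 0;
  Aadd : forall a b, sA a -> sA b -> sA (a + b);
  Aopp : forall a, sA a -> sA (- a);
  Ar : sA sr;
  Amul : forall l a, sLam l -> sA a -> sA (l * a);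
  halpha : 0 <= salpha <= sr;
  hbeta : 0 <= sbeta <= sr;
  hAalpha : sA salpha;
  hAbeta : sA sbeta;
  hab : salpha < sbeta
}.

Section Setting.
Context {St : Sett}.
Local Notation r := sr.
Local Notation Lam := sLam.
Local Notation A := sA.
Local Notation alpha := salpha.
Local Notation beta := sbeta.
#[local] Hint Resolve L1 Lmul Linv A0 Aadd Aopp Amul Ar hAalpha hAbeta : core.

Definition raff (f : R -> R) t := exists e m c, 0 < e /\ Lam m /\
  forall s, t <= s < t + e -> f s = m * s + c.
Definition laff (f : R -> R) t := exists e m c, 0 < e /\ Lam m /\
  forall s, t - e < s <= t -> f s = m * s + c.
Definition smooth (f : R -> R) t := exists e m c, 0 < e /\ Lam m /\
  forall s, t - e < s < t + e -> f s = m * s + c.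

Record QQ (f : R -> R) : Prop := {
  q_out : forall t, ~ (alpha < t < beta) -> f t = t;
  q_raff : forall t, raff f t;
  q_laff : forall t, laff f t;
  q_nA : forall t, ~ A t -> smooth f t;
  q_brk : exists B : list R, forall t, ~ In t B -> smooth f t;
  q_A : forall t, A t <-> A (f t);
  q_surj : forall v, exists t, f t = v
}.

Lemma Asub a b : A a -> A b -> A (a - b).
Proof. intros. unfold Rminus. auto. Qed.

Lemma line_eq m1 c1 m2 c2 s1 s2 : s1 <> s2 ->
  m1 * s1 + c1 = m2 * s1 + c2 -> m1 * s2 + c1 = m2 * s2 + c2 -> m1 = m2 /\ c1 = c2.
Proof.
  intros Hne H1 H2.
  assert (Hm : (m1 - m2) * (s1 - s2) = 0) by nra.
  apply Rmult_integral in Hm. destruct Hm as [Hm|Hm]; [|exfalso; apply Hne; lra].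
  assert (m1 = m2) by lra. subst. split; lra.
Qed.

Lemma abs_lt x a : Rabs x < a <-> - a < x < a.
Proof. unfold Rabs; destruct Rcase_abs; split; intros; lra. Qed.

Lemma div_bnd a m e : 0 < m -> 0 <= a -> a < m * e -> 0 <= a / m < e.
Proof.
  intros Hm Ha Hae. split.
  - unfold Rdiv; apply Rmult_le_pos; auto; left; apply Rinv_0_lt_compat; auto.
  - apply (Rmult_lt_reg_l m); auto. unfold Rdiv. rewrite <- Rmult_assoc, (Rmult_comm m a), Rmult_assoc, Rinv_r; lra.
Qed.

Lemma div_bnd' a m e : 0 < m -> Rabs a < m * e -> Rabs (a / m) < e.
Proof.
  intros Hm Hae. unfold Rdiv. rewrite Rabs_mult, (Rabs_right (/m)) by (left; apply Rinv_0_lt_compat; auto).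
  apply (Rmult_lt_reg_l m); auto. rewrite <- Rmult_assoc, (Rmult_comm m), Rmult_assoc, Rinv_r; lra.
Qed.

Lemma smooth_raff f t : smooth f t -> raff f t.
Proof. intros [e [m [c [He [Hm H]]]]]. exists e, m, c. repeat split; auto. intros s Hs; apply H; lra. Qed.
Lemma smooth_laff f t : smooth f t -> laff f t.
Proof. intros [e [m [c [He [Hm H]]]]]. exists e, m, c. repeat split; auto. intros s Hs; apply H; lra. Qed.

Lemma cont_of f t : raff f t -> laff f t ->
  forall eps, 0 < eps -> exists d, 0 < d /\ forall s, Rabs (s - t) < d -> Rabs (f s - f t) < eps.
Proof.
  intros [e1 [m1 [c1 [He1 [Hm1 H1]]]]] [e2 [m2 [c2 [He2 [Hm2 H2]]]]] eps Heps.
  pose proof (Lpos _ Hm1). pose proof (Lpos _ Hm2).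
  exists (Rmin (Rmin e1 e2) (eps / (m1 + m2))). split.
  { apply Rmin_glb_lt; [apply Rmin_glb_lt|]; auto. apply Rdiv_lt_0_compat; lra. }
  intros s Hs.
  assert (Hd1 := Rmin_l (Rmin e1 e2) (eps / (m1 + m2))).
  assert (Hd2 := Rmin_r (Rmin e1 e2) (eps / (m1 + m2))).
  assert (Hd3 := Rmin_l e1 e2). assert (Hd4 := Rmin_r e1 e2).
  assert (Hb : Rabs (s - t) < eps / (m1 + m2)) by lra.
  assert (Hb2 : Rabs (s - t) * (m1 + m2) < eps).
  { apply (Rmult_lt_compat_r (m1 + m2)) in Hb; [|lra].
    unfold Rdiv in Hb. rewrite Rmult_assoc, Rinv_l in Hb; lra. }
  assert (Ht1 : f t = m1 * t + c1) by (apply H1; lra).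
  assert (Ht2 : f t = m2 * t + c2) by (apply H2; lra).
  assert (0 <= Rabs (s - t)) by apply Rabs_pos.
  destruct (Rle_dec t s).
  - rewrite (H1 s) by (split; [lra| apply abs_lt in Hs; lra]).
    rewrite Ht1. replace (m1 * s + c1 - (m1 * t + c1)) with (m1 * (s - t)) by ring.
    rewrite Rabs_mult, (Rabs_right m1) by lra. nra.
  - rewrite (H2 s) by (split; [apply abs_lt in Hs; lra|lra]).
    rewrite Ht2. replace (m2 * s + c2 - (m2 * t + c2)) with (m2 * (s - t)) by ring.
    rewrite Rabs_mult, (Rabs_right m2) by lra. nra.
Qed.

Lemma mono_gen f u v : u < v ->
  (forall t, u <= t < v -> raff f t) -> (forall t, u < t <= v -> laff f t) -> f u < f v.
Proof.
  intros Huv HR HL.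
  assert (H : forall s, u <= s <= v -> s = u \/ f u < f s).
  { apply real_ind; [lra|left; auto| |].
    - intros t Ht IH. destruct (HR t Ht) as [e [m [c [He [Hm H]]]]].
      pose proof (Lpos _ Hm). exists e; split; auto. intros s Hs.
      destruct (Req_dec s t) as [->|Hne]. apply IH; lra.
      right. assert (f t < f s) by (rewrite (H s), (H t) by lra; nra).
      destruct (IH t ltac:(lra)) as [->|]; lra.
    - intros t Ht IH. right. destruct (HL t Ht) as [e [m [c [He [Hm H]]]]].
      pose proof (Lpos _ Hm).
      set (s := Rmax u (t - e/2)).
      assert (Hs1 : u <= s) by (unfold s; apply Rmax_l).
      assert (Hs2 : t - e/2 <= s) by (unfold s; apply Rmax_r).
      assert (Hs3 : s < t) by (unfold s; unfold Rmax; destruct Rle_dec; lra).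
      assert (f s < f t) by (rewrite (H s), (H t) by lra; nra).
      destruct (IH s ltac:(lra)) as [Heq|]; [|lra]. rewrite <- Heq in *; lra. }
  destruct (H v ltac:(lra)); lra.
Qed.

Lemma QQ_mono f : QQ f -> forall s t, s < t -> f s < f t.
Proof. intros Hf s t Hst. apply mono_gen; auto; intros; [apply q_raff|apply q_laff]; auto. Qed.

Lemma QQ_inj f : QQ f -> forall s t, f s = f t -> s = t.
Proof.
  intros Hf s t H. destruct (Rtotal_order s t) as [H1|[H1|H1]]; auto;
  apply (QQ_mono f Hf) in H1; lra.
Qed.

Lemma QQ_le f : QQ f -> forall s t, f s <= f t <-> s <= t.
Proof.
  intros Hf s t. split; intro H.
  - destruct (Rle_dec s t); auto. assert (f t < f s) by (apply QQ_mono; auto; lra). lra.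
  - destruct (Req_dec s t) as [->|]; [lra|]. left; apply QQ_mono; auto; lra.
Qed.

Lemma QQ_lt f : QQ f -> forall s t, f s < f t <-> s < t.
Proof.
  intros Hf s t. split; intro H.
  - destruct (Rlt_dec s t); auto. assert (f t <= f s) by (apply QQ_le; auto; lra). lra.
  - apply QQ_mono; auto.
Qed.

Lemma QQ_cont f : QQ f -> forall t eps, 0 < eps ->
  exists d, 0 < d /\ forall s, Rabs (s - t) < d -> Rabs (f s - f t) < eps.
Proof. intros Hf t. apply cont_of; [apply q_raff|apply q_laff]; auto. Qed.

Lemma raff_comp f g t : raff f t -> raff g (f t) -> raff (fun s => g (f s)) t.
Proof.
  intros [e1 [m1 [c1 [He1 [Hm1 H1]]]]] [e2 [m2 [c2 [He2 [Hm2 H2]]]]].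
  pose proof (Lpos _ Hm1).
  exists (Rmin e1 (e2 / m1)), (m2 * m1), (m2 * c1 + c2). repeat split; auto.
  - apply Rmin_glb_lt; auto. apply Rdiv_lt_0_compat; lra.
  - intros s Hs. assert (Hb1 := Rmin_l e1 (e2/m1)). assert (Hb2 := Rmin_r e1 (e2/m1)).
    assert (Hb3 : m1 * (s - t) < e2).
    { assert (s - t < e2 / m1) by lra. apply (Rmult_lt_compat_l m1) in H0; auto.
      unfold Rdiv in H0; rewrite <- Rmult_assoc, (Rmult_comm m1 e2), Rmult_assoc, Rinv_r in H0; lra. }
    rewrite (H1 s) by lra. rewrite H2. ring.
    rewrite (H1 t) by lra. split; nra.
Qed.

Lemma laff_comp f g t : laff f t -> laff g (f t) -> laff (fun s => g (f s)) t.
Proof.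
  intros [e1 [m1 [c1 [He1 [Hm1 H1]]]]] [e2 [m2 [c2 [He2 [Hm2 H2]]]]].
  pose proof (Lpos _ Hm1).
  exists (Rmin e1 (e2 / m1)), (m2 * m1), (m2 * c1 + c2). repeat split; auto.
  - apply Rmin_glb_lt; auto. apply Rdiv_lt_0_compat; lra.
  - intros s Hs. assert (Hb1 := Rmin_l e1 (e2/m1)). assert (Hb2 := Rmin_r e1 (e2/m1)).
    assert (Hb3 : m1 * (t - s) < e2).
    { assert (t - s < e2 / m1) by lra. apply (Rmult_lt_compat_l m1) in H0; auto.
      unfold Rdiv in H0; rewrite <- Rmult_assoc, (Rmult_comm m1 e2), Rmult_assoc, Rinv_r in H0; lra. }
    rewrite (H1 s) by lra. rewrite H2. ring.
    rewrite (H1 t) by lra. split; nra.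
Qed.

Lemma smooth_comp f g t : smooth f t -> smooth g (f t) -> smooth (fun s => g (f s)) t.
Proof.
  intros [e1 [m1 [c1 [He1 [Hm1 H1]]]]] [e2 [m2 [c2 [He2 [Hm2 H2]]]]].
  pose proof (Lpos _ Hm1).
  exists (Rmin e1 (e2 / m1)), (m2 * m1), (m2 * c1 + c2). repeat split; auto.
  - apply Rmin_glb_lt; auto. apply Rdiv_lt_0_compat; lra.
  - intros s Hs. assert (Hb1 := Rmin_l e1 (e2/m1)). assert (Hb2 := Rmin_r e1 (e2/m1)).
    assert (Hb3 : m1 * (Rabs (s - t)) < e2).
    { assert (Rabs (s - t) < e2 / m1) by (apply abs_lt; lra).
      apply (Rmult_lt_compat_l m1) in H0; auto.
      unfold Rdiv in H0; rewrite <- Rmult_assoc, (Rmult_comm m1 e2), Rmult_assoc, Rinv_r in H0; lra. }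
    rewrite (H1 s) by lra. rewrite H2. ring.
    rewrite (H1 t) by lra. destruct (Rle_dec s t).
    + rewrite Rabs_left1 in Hb3 by lra. split; nra.
    + rewrite Rabs_right in Hb3 by lra. split; nra.
Qed.

Lemma QQ_pre f : QQ f -> forall L : list R, exists L', forall t, In (f t) L -> In t L'.
Proof.
  intros Hf L. induction L as [|b L [L' IH]].
  - exists nil. intros t [].
  - destruct (q_surj f Hf b) as [t0 Ht0]. exists (t0 :: L'). intros t [H|H].
    + left. apply (QQ_inj f Hf). congruence.
    + right; auto.
Qed.

Lemma QQ_comp f g : QQ f -> QQ g -> QQ (fun s => g (f s)).
Proof.
  intros Hf Hg. constructor.
  - intros t Ht. rewrite (q_out f Hf t Ht). apply (q_out g Hg t Ht).
  - intros t. apply raff_comp; apply q_raff; auto.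
  - intros t. apply laff_comp; apply q_laff; auto.
  - intros t Ht. apply smooth_comp; apply q_nA; auto. rewrite <- (q_A f Hf). auto.
  - destruct (q_brk f Hf) as [B1 HB1]. destruct (q_brk g Hg) as [B2 HB2].
    destruct (QQ_pre f Hf B2) as [L' HL']. exists (B1 ++ L'). intros t Ht.
    apply smooth_comp. apply HB1. intro; apply Ht; apply in_or_app; auto.
    apply HB2. intro; apply Ht; apply in_or_app; auto.
  - intros t. rewrite (q_A f Hf), (q_A g Hg). tauto.
  - intros v. destruct (q_surj g Hg v) as [w Hw]. destruct (q_surj f Hf w) as [t Ht].
    exists t. congruence.
Qed.

Lemma QQ_id : QQ (fun t => t).
Proof.
  constructor; auto.
  - intros t; exists 1, 1, 0; repeat split; auto; try lra; intros; ring.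
  - intros t; exists 1, 1, 0; repeat split; auto; try lra; intros; ring.
  - intros t _; exists 1, 1, 0; repeat split; auto; try lra; intros; ring.
  - exists nil. intros t _; exists 1, 1, 0; repeat split; auto; try lra; intros; ring.
  - tauto.
  - intros v; exists v; auto.
Qed.

Definition inv (f : R -> R) (v : R) : R := epsilon (inhabits 0) (fun t => f t = v).

Lemma inv_r f : QQ f -> forall v, f (inv f v) = v.
Proof. intros Hf v. unfold inv. apply epsilon_spec. apply (q_surj f Hf). Qed.

Lemma inv_l f : QQ f -> forall t, inv f (f t) = t.
Proof. intros Hf t. apply (QQ_inj f Hf). apply inv_r; auto. Qed.

Lemma smooth_inv f v : QQ f -> smooth f (inv f v) -> smooth (inv f) v.
Proof.
  intros Hf [e [m [c [He [Hm H]]]]]. pose proof (inv_r f Hf) as Hr. pose proof (inv_l f Hf) as Hl.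
  pose proof (Lpos _ Hm).
  assert (Hv : v = m * inv f v + c) by (rewrite <- (H (inv f v)) by lra; auto).
  set (t0 := inv f v) in *. clearbody t0.
  exists (m * e), (/ m), (- c / m). repeat split; auto. nra.
  intros w Hw. set (s := (w - c) / m).
  assert (Hst : s - t0 = (w - v) / m) by (unfold s; subst v; field; lra).
  assert (Hb := div_bnd' (w - v) m e H0 ltac:(apply abs_lt; lra)).
  apply abs_lt in Hb.
  assert (Hs : f s = w) by (rewrite H; [unfold s; field; lra|lra]).
  transitivity s; [rewrite <- Hs; apply Hl|unfold s; field; lra].
Qed.

Lemma QQ_inv f : QQ f -> QQ (inv f).
Proof.
  intros Hf. pose proof (inv_r f Hf) as Hr. pose proof (inv_l f Hf) as Hl.
  constructor.
  - intros t Ht. apply (QQ_inj f Hf). rewrite Hr. symmetry; apply (q_out f Hf t Ht).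
  - intros v. destruct (q_raff f Hf (inv f v)) as [e [m [c [He [Hm H]]]]].
    pose proof (Lpos _ Hm).
    assert (Hv : v = m * inv f v + c) by (rewrite <- (H (inv f v)) by lra; auto).
    set (t0 := inv f v) in *. clearbody t0.
    exists (m * e), (/ m), (- c / m). repeat split; auto. nra.
    intros w Hw. set (s := (w - c) / m).
    assert (Hst : s - t0 = (w - v) / m) by (unfold s; subst v; field; lra).
    assert (Hb := div_bnd (w - v) m e H0 ltac:(lra) ltac:(lra)).
    assert (Hs : f s = w) by (rewrite H; [unfold s; field; lra|lra]).
    transitivity s; [rewrite <- Hs; apply Hl|unfold s; field; lra].
  - intros v. destruct (q_laff f Hf (inv f v)) as [e [m [c [He [Hm H]]]]].
    pose proof (Lpos _ Hm).
    assert (Hv : v = m * inv f v + c) by (rewrite <- (H (inv f v)) by lra; auto).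
    set (t0 := inv f v) in *. clearbody t0.
    exists (m * e), (/ m), (- c / m). repeat split; auto. nra.
    intros w Hw. set (s := (w - c) / m).
    assert (Hst : t0 - s = (v - w) / m) by (unfold s; subst v; field; lra).
    assert (Hb := div_bnd (v - w) m e H0 ltac:(lra) ltac:(lra)).
    assert (Hs : f s = w) by (rewrite H; [unfold s; field; lra|lra]).
    transitivity s; [rewrite <- Hs; apply Hl|unfold s; field; lra].
  - intros v Hv. apply smooth_inv; auto. apply q_nA; auto. rewrite (q_A f Hf), Hr. auto.
  - destruct (q_brk f Hf) as [B HB]. exists (map f B). intros v Hv.
    apply smooth_inv; auto. apply HB. intro Hin. apply Hv. rewrite <- (Hr v). apply in_map; auto.
  - intros v. rewrite (q_A f Hf (inv f v)), Hr. tauto.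
  - intros t. exists (f t). auto.
Qed.

End Setting.

Section Chain.
Context {St : Sett}.
Local Notation r := sr.
Local Notation Lam := sLam.
Local Notation A := sA.
Local Notation alpha := salpha.
Local Notation beta := sbeta.
#[local] Hint Resolve L1 Lmul Linv A0 Aadd Aopp Amul Ar hAalpha hAbeta : core.

Fixpoint chainP (f : R -> R) (a : R) (l : list R) (v : R) : Prop :=
  match l with
  | nil => a = v /\ A a
  | b :: l' => a < b /\ A a /\ A (f a) /\
      (exists m c, Lam m /\ forall t, a <= t < b -> f t = m * t + c) /\ chainP f b l' v
  end.

Lemma chain_app f a l1 b l2 v : chainP f a l1 b -> chainP f b l2 v -> chainP f a (l1 ++ l2) v.
Proof.
  revert a. induction l1 as [|c l1 IH]; simpl; intros a H1 H2.
  - destruct H1 as [-> _]; auto.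
  - destruct H1 as [? [? [? [? ?]]]]. repeat split; auto.
Qed.

Lemma chain_le f a l v : chainP f a l v -> a <= v.
Proof.
  revert a. induction l as [|b l IH]; simpl; intros a H.
  - lra.
  - destruct H as [Hab [_ [_ [_ Hc]]]]. specialize (IH b Hc). lra.
Qed.

Lemma chain_A f a l v : chainP f a l v -> Forall A (a :: l).
Proof.
  revert a. induction l as [|b l IH]; simpl; intros a H.
  - constructor; [tauto|constructor].
  - destruct H as [? [? [? [? ?]]]]. constructor; auto.
Qed.

Lemma chain_in_bounds f a l v : chainP f a l v -> forall p, In p (a :: l) -> a <= p <= v.
Proof.
  revert a. induction l as [|b l IH]; simpl; intros a H p Hp.
  - destruct H as [-> _]. destruct Hp as [<-|[]]; lra.
  - destruct H as [Hab [_ [_ [_ Hc]]]]. destruct Hp as [<-|Hp].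
    + pose proof (chain_le _ _ _ _ Hc). lra.
    + specialize (IH b Hc p Hp). lra.
Qed.

Lemma chain_piece_r f a l v t : chainP f a l v -> a <= t < v ->
  exists p q m c, In p (a :: l) /\ p <= t < q /\ A p /\ A (f p) /\ Lam m /\
    (forall s, p <= s < q -> f s = m * s + c) /\ (forall s, p < s < q -> ~ In s (a :: l)).
Proof.
  revert a. induction l as [|b l IH]; simpl; intros a H Ht.
  - lra.
  - destruct H as [Hab [HA [HfA [[m [c [Hm Hp]]] Hc]]]].
    destruct (Rlt_dec t b).
    + exists a, b, m, c. repeat split; auto; try lra.
      intros s Hs [Hs'|Hs']. lra.
      pose proof (chain_in_bounds f b l v Hc s Hs'). lra.
    + destruct (IH b Hc ltac:(lra)) as [p [q [m' [c' [Hin [? [? [? [? [? Hno]]]]]]]]]].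
      exists p, q, m', c'. split; [simpl; tauto|]. repeat (split; [auto|]).
      intros s Hs [Hs'|Hs']. destruct (chain_in_bounds f b l v Hc p Hin). lra.
      apply (Hno s Hs); auto.
Qed.

Lemma chain_piece_l f a l v t : chainP f a l v -> a < t <= v ->
  exists p q m c, In p (a :: l) /\ In q (a :: l) /\ p < t <= q /\ A p /\ A (f p) /\ Lam m /\
    (forall s, p <= s < q -> f s = m * s + c) /\ (forall s, p < s < q -> ~ In s (a :: l)).
Proof.
  revert a. induction l as [|b l IH]; simpl; intros a H Ht.
  - destruct H; lra.
  - destruct H as [Hab [HA [HfA [[m [c [Hm Hp]]] Hc]]]].
    destruct (Rle_dec t b).
    + exists a, b, m, c. split; [simpl; auto|]. repeat split; auto; try lra.
      intros s Hs [Hs'|Hs']. lra.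
      pose proof (chain_in_bounds f b l v Hc s Hs'). lra.
    + destruct (IH b Hc ltac:(lra)) as [p [q [m' [c' [Hinp [Hin [? [? [? [? [? Hno]]]]]]]]]]].
      exists p, q, m', c'. split; [simpl; tauto|]. split; [simpl; tauto|]. repeat (split; [auto|]).
      intros s Hs [Hs'|Hs']. assert (p >= b).
      { destruct (Rlt_dec p b); [|lra]. exfalso. apply (Hno b). split; [lra|].
        destruct (chain_in_bounds f b l v Hc q Hin). lra. simpl; auto. }
      lra.
      apply (Hno s Hs); auto.
Qed.

Lemma nth_to_chain f : forall l a,
  Forall A (a :: l) ->
  (forall i, (S i < length (a :: l))%nat -> nth i (a :: l) 0 < nth (S i) (a :: l) 0) ->
  (forall i, (S i < length (a :: l))%nat ->
     A (f (nth i (a :: l) 0)) /\ exists lam c, Lam lam /\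
       forall t, nth i (a :: l) 0 <= t < nth (S i) (a :: l) 0 -> f t = lam * t + c) ->
  chainP f a l (last (a :: l) 0).
Proof.
  induction l as [|b l IH]; intros a HA Hinc Hp.
  - simpl. inversion HA; auto.
  - inversion HA; subst. simpl (chainP f a (b :: l) _).
    assert (H0 : (S 0 < length (a :: b :: l))%nat) by (simpl; lia).
    destruct (Hp 0%nat H0) as [HfA Hpc]. pose proof (Hinc 0%nat H0) as Hi0. simpl in Hi0.
    split; [auto|]. split; [auto|]. split; [auto|]. split; [auto|].
    replace (last (a :: b :: l) 0) with (last (b :: l) 0) by (destruct l; reflexivity).
    apply IH; auto.
    + intros i Hi. apply (Hinc (S i)). simpl in *; lia.
    + intros i Hi. apply (Hp (S i)). simpl in *; lia.
Qed.

Lemma chain_to_nth f : forall l a v, chainP f a l v ->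
  last (a :: l) 0 = v /\ Forall A (a :: l) /\
  (forall i, (S i < length (a :: l))%nat -> nth i (a :: l) 0 < nth (S i) (a :: l) 0) /\
  (forall i, (S i < length (a :: l))%nat ->
     A (f (nth i (a :: l) 0)) /\ exists lam c, Lam lam /\
       forall t, nth i (a :: l) 0 <= t < nth (S i) (a :: l) 0 -> f t = lam * t + c).
Proof.
  induction l as [|b l IH]; intros a v H.
  - simpl in H. destruct H as [-> HA]. split; [reflexivity|]. split; [constructor; auto|].
    split; intros i Hi; simpl in Hi; lia.
  - simpl in H. destruct H as [Hab [HA [HfA [Hpc Hc]]]].
    destruct (IH b v Hc) as [Hl [HAl [Hinc Hp]]].
    split; [rewrite <- Hl; destruct l; reflexivity|].
    split; [constructor; auto|].
    split.
    + intros [|i] Hi. simpl; auto. apply (Hinc i). simpl in *; lia.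
    + intros [|i] Hi. simpl; auto. apply (Hp i). simpl in *; lia.
Qed.

End Chain.

Section Conv.
Context {St : Sett}.
Local Notation r := sr.
Local Notation Lam := sLam.
Local Notation A := sA.
Local Notation alpha := salpha.
Local Notation beta := sbeta.
#[local] Hint Resolve L1 Lmul Linv A0 Aadd Aopp Amul Ar hAalpha hAbeta : core.

Definition IS (t : R) := alpha < t < beta.

Lemma left_val f p t m c : cont_on_dom r f -> inDom r t -> 0 <= p < t ->
  (forall s, p < s < t -> f s = m * s + c) -> f t = m * t + c.
Proof.
  intros Hc Ht Hp H.
  destruct (Req_dec (f t) (m * t + c)) as [|Hne]; auto. exfalso.
  set (d := Rabs (f t - (m * t + c))).
  assert (Hd : 0 < d) by (apply Rabs_pos_lt; lra).
  destruct (Hc t Ht (d / 2) ltac:(lra)) as [alp [Halp Hl]].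
  set (s0 := Rmax p (Rmax (t - alp / 2) (t - d / (4 * (Rabs m + 1))))).
  assert (Hm1 : 0 < Rabs m + 1) by (pose proof (Rabs_pos m); lra).
  assert (Hq : 0 < d / (4 * (Rabs m + 1))) by (apply Rdiv_lt_0_compat; lra).
  assert (Hs1 : p <= s0) by (unfold s0; apply Rmax_l).
  assert (Hs2 : t - alp / 2 <= s0) by (unfold s0; eapply Rle_trans; [|apply Rmax_r]; apply Rmax_l).
  assert (Hs3 : t - d / (4 * (Rabs m + 1)) <= s0) by (unfold s0; eapply Rle_trans; [|apply Rmax_r]; apply Rmax_r).
  assert (Hs4 : s0 < t) by (unfold s0; repeat (apply Rmax_lub_lt); lra).
  set (s := (s0 + t) / 2).
  assert (Hfs : Rabs (f s - f t) < d / 2).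
  { assert (HH := Hl s). unfold dist in HH; simpl in HH; unfold Rdist in HH. apply HH.
    split. unfold inDom in *; unfold s; lra. rewrite Rabs_left1 by (unfold s; lra). unfold s; lra. }
  rewrite (H s) in Hfs by (unfold s; lra).
  assert (Hms : Rabs (m * s + c - (m * t + c)) <= d / 8).
  { replace (m * s + c - (m * t + c)) with (m * (s - t)) by ring. rewrite Rabs_mult.
    rewrite (Rabs_left1 (s - t)) by (unfold s; lra).
    assert (Hts : - (s - t) <= d / (8 * (Rabs m + 1))).
    { unfold s. assert (d / (8 * (Rabs m + 1)) = (d / (4 * (Rabs m + 1))) / 2) by (field; lra). lra. }
    assert (Hx : Rabs m * (d / (8 * (Rabs m + 1))) <= d / 8).
    { replace (Rabs m * (d / (8 * (Rabs m + 1)))) with ((d / 8) * (Rabs m / (Rabs m + 1))) by (field; lra).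
      assert (Rabs m / (Rabs m + 1) <= 1).
      { apply (Rmult_le_reg_r (Rabs m + 1)); auto. unfold Rdiv; rewrite Rmult_assoc, Rinv_l; lra. }
      assert (0 <= Rabs m / (Rabs m + 1)) by (apply Rmult_le_pos; [apply Rabs_pos|left; apply Rinv_0_lt_compat; lra]).
      nra. }
    pose proof (Rabs_pos m). nra. }
  assert (Htri : Rabs (f t - (m * t + c)) <= Rabs (f t - (m * s + c)) + Rabs (m * s + c - (m * t + c))).
  { replace (f t - (m * t + c)) with ((f t - (m * s + c)) + (m * s + c - (m * t + c))) by ring. apply Rabs_triang. }
  rewrite Rabs_minus_sym in Hfs. fold d in Htri. lra.
Qed.

End Conv.

Section Conv2.
Context {St : Sett}.
Local Notation r := sr.
Local Notation Lam := sLam.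
Local Notation A := sA.
Local Notation alpha := salpha.
Local Notation beta := sbeta.
#[local] Hint Resolve L1 Lmul Linv A0 Aadd Aopp Amul Ar hAalpha hAbeta : core.

Lemma id_raff f t e : 0 < e -> (forall s, t <= s < t + e -> f s = s) -> raff f t.
Proof. intros He H. exists e, 1, 0. repeat split; auto. intros s Hs. rewrite H; auto; ring. Qed.
Lemma id_laff f t e : 0 < e -> (forall s, t - e < s <= t -> f s = s) -> laff f t.
Proof. intros He H. exists e, 1, 0. repeat split; auto. intros s Hs. rewrite H; auto; ring. Qed.
Lemma id_smooth f t e : 0 < e -> (forall s, t - e < s < t + e -> f s = s) -> smooth f t.
Proof. intros He H. exists e, 1, 0. repeat split; auto. intros s Hs. rewrite H; auto; ring. Qed.

Lemma F_QQ f : inF_S r Lam A IS f -> QQ f.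
Proof.
  intros [[[Hmap [Hcont [g [Hgmap [Hgcont [Hgf Hfg]]]]]] [HPL Hout]] Hsupp].
  destruct HPL as [l0 [Hlen [H0 [Hlast [HA [Hinc Hp]]]]]].
  destruct l0 as [|a l]; [simpl in Hlen; lia|]. simpl in H0. subst a.
  pose proof (nth_to_chain f l 0 HA Hinc Hp) as Hch. rewrite Hlast in Hch.
  assert (Hal := halpha). assert (Hbe := hbeta). assert (Hab := hab). assert (Hr0 := hr).
  assert (Hqo : forall t, ~ IS t -> f t = t).
  { intros t Ht. destruct (classic (inDom r t)) as [Hd|Hd]; [|apply Hout; auto].
    destruct (Req_dec (f t) t) as [|Hne]; [auto|]. exfalso; apply Ht; apply Hsupp; auto. }
  assert (Hrp : forall t, 0 <= t < r -> exists p q m c, In p (0 :: l) /\ p <= t < q /\ A p /\ A (f p) /\ Lam m /\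
    (forall s, p <= s < q -> f s = m * s + c)) .
  { intros t Ht. destruct (chain_piece_r f 0 l r t Hch Ht) as [p [q [m [c [? [? [? [? [? [? _]]]]]]]]]].
    exists p, q, m, c; repeat split; auto; lra. }
  assert (Hlp : forall t, 0 < t < r -> exists p m c, p < t /\ Lam m /\ forall s, p < s <= t -> f s = m * s + c).
  { intros t Ht. destruct (chain_piece_l f 0 l r t Hch ltac:(lra)) as [p [q [m [c [Hinp [Hq [? [? [? [? [Hpc _]]]]]]]]]]].
    assert (Hp0 : 0 <= p) by (apply (chain_in_bounds f 0 l r Hch p Hinp)).
    assert (Hqr : q <= r) by (apply (chain_in_bounds f 0 l r Hch q Hq)).
    exists p, m, c. repeat split; auto; try lra. intros s Hs.
    destruct (Req_dec s q) as [->|Hsq].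
    - assert (q = t) by lra. subst q. apply (left_val f p t m c Hcont); [unfold inDom; lra|lra|].
      intros; apply Hpc; lra.
    - apply Hpc; lra. }
  assert (Hraff0 : forall t, 0 <= t < r -> raff f t).
  { intros t Ht. destruct (Hrp t Ht) as [p [q [m [c [_ [? [_ [_ [? Hpc]]]]]]]]].
    exists (q - t), m, c. repeat split; auto; try lra. intros s Hs; apply Hpc; lra. }
  assert (Hlaff0 : forall t, 0 < t < r -> laff f t).
  { intros t Ht. destruct (Hlp t Ht) as [p [m [c [? [? Hpc]]]]].
    exists (t - p), m, c. repeat split; auto; try lra. intros s Hs; apply Hpc; lra. }
  assert (Hmono : forall u v, 0 <= u < v -> v < r -> f u < f v).
  { intros u v Hu Hv. apply mono_gen; try lra; intros; [apply Hraff0|apply Hlaff0]; lra. }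
  assert (Hatr : forall p m c, 0 <= p < r -> Lam m -> (forall s, p <= s < r -> f s = m * s + c) -> m * r + c = r).
  { intros p m c Hp0 Hm Hpc. pose proof (Lpos _ Hm).
    destruct (Rtotal_order (m * r + c) r) as [Hlt|[Heq|Hgt]]; auto; exfalso.
    - set (v := (m * r + c + r) / 2).
      assert (Hfp := Hmap p ltac:(unfold inDom; lra)). unfold inDom in Hfp. rewrite Hpc in Hfp by lra.
      assert (Hv : inDom r v) by (unfold inDom, v; nra).
      pose proof (Hgmap v Hv) as Hw. pose proof (Hfg v Hv) as Hfw. unfold inDom in Hw.
      assert (Hvd : v = (m * r + c + r) / 2) by reflexivity. clearbody v.
      destruct (Rle_dec p (g v)) as [Hpg|Hpg].
      + rewrite Hpc in Hfw by lra.
        assert (m * (g v) < m * r) by (apply Rmult_lt_compat_l; lra). lra.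
      + assert (Hfgp : f (g v) < f p) by (apply Hmono; lra). rewrite (Hpc p) in Hfgp by lra.
        assert (m * p < m * r) by (apply Rmult_lt_compat_l; lra). lra.
    - set (d := (m * r + c - r) / m).
      assert (Hd : 0 < d) by (unfold d; apply Rdiv_lt_0_compat; lra).
      set (s := Rmax p (r - d / 2)).
      assert (Hs1 : p <= s) by apply Rmax_l. assert (Hs2 : r - d/2 <= s) by apply Rmax_r.
      assert (Hs3 : s < r) by (unfold s; apply Rmax_lub_lt; lra).
      assert (Hfs := Hmap s ltac:(unfold inDom; lra)). unfold inDom in Hfs. rewrite Hpc in Hfs by lra.
      assert (Hmd : m * d = m * r + c - r) by (unfold d; field; lra).
      nra. }
  assert (Hlaffr : laff f r).
  { assert (Hrr : 0 < r <= r) by lra.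
    destruct (chain_piece_l f 0 l r r Hch Hrr) as [p [q [m [c [Hinp [Hq [? [? [? [? [Hpc _]]]]]]]]]]].
    assert (Hp0 : 0 <= p) by (apply (chain_in_bounds f 0 l r Hch p Hinp)).
    assert (Hqr : q <= r) by (apply (chain_in_bounds f 0 l r Hch q Hq)).
    assert (Hmr : m * r + c = r) by (apply (Hatr p m c); auto; lra || (intros; apply Hpc; lra)).
    exists (r - p), m, c. repeat split; auto; try lra. intros s Hs.
    destruct (Req_dec s r) as [->|]. rewrite Hout; [lra|unfold inDom; lra]. apply Hpc; lra. }
  assert (Hsm : forall t, alpha < t < beta -> (exists p q m c, p < t < q /\ Lam m /\ A p /\ A (f p) /\
      (forall s, p <= s < q -> f s = m * s + c)) \/ In t (0 :: l)).
  { intros t Ht. destruct (classic (In t (0 :: l))) as [|Hn]; [right; auto|left].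
    destruct (Hrp t ltac:(lra)) as [p [q [m [c [Hin [? [? [? [? Hpc]]]]]]]]].
    exists p, q, m, c. repeat split; auto; try lra. destruct (Req_dec p t); [subst; contradiction|lra]. }
  constructor.
  - exact Hqo.
  - intros t. destruct (Rlt_dec t alpha) as [Hd1|Hd1].
    + apply (id_raff f t (alpha - t)); [lra|]. intros s Hs; apply Hqo; unfold IS; lra.
    + destruct (Rlt_dec t beta) as [Hd2|Hd2]. apply Hraff0; lra.
      apply (id_raff f t 1); [lra|]. intros s Hs; apply Hqo; unfold IS; lra.
  - intros t. destruct (Rle_dec t alpha) as [Hd3|Hd3].
    + apply (id_laff f t 1); [lra|]. intros s Hs; apply Hqo; unfold IS; lra.
    + destruct (Rle_dec t beta) as [Hd4|Hd4].
      * destruct (Req_dec t r) as [->|]; auto. apply Hlaff0; lra.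
      * apply (id_laff f t (t - beta)); [lra|]. intros s Hs; apply Hqo; unfold IS; lra.
  - intros t Ht. destruct (Rlt_dec t alpha) as [Hd5|Hd5].
    + apply (id_smooth f t (alpha - t)); [lra|]. intros s Hs; apply Hqo; unfold IS; lra.
    + destruct (Rlt_dec beta t) as [Hd6|Hd6].
      * apply (id_smooth f t (t - beta)); [lra|]. intros s Hs; apply Hqo; unfold IS; lra.
      * destruct (Req_dec t alpha) as [->|]; [exfalso; auto|].
        destruct (Req_dec t beta) as [->|]; [exfalso; auto|].
        destruct (Hsm t ltac:(lra)) as [[p [q [m [c [? [? [? [? Hpc]]]]]]]]|Hin].
        -- exists (Rmin (t - p) (q - t)), m, c. split. apply Rmin_glb_lt; lra. split; auto.
           intros s Hs. assert (Hm1 := Rmin_l (t - p) (q - t)). assert (Hm2 := Rmin_r (t - p) (q - t)).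
           apply Hpc; lra.
        -- exfalso. apply Ht. pose proof (chain_A f 0 l r Hch) as HA'. rewrite Forall_forall in HA'. auto.
  - exists (alpha :: beta :: 0 :: l). intros t Ht. destruct (Rlt_dec t alpha) as [Hd7|Hd7].
    + apply (id_smooth f t (alpha - t)); [lra|]. intros s Hs; apply Hqo; unfold IS; lra.
    + destruct (Rlt_dec beta t) as [Hd8|Hd8].
      * apply (id_smooth f t (t - beta)); [lra|]. intros s Hs; apply Hqo; unfold IS; lra.
      * destruct (Req_dec t alpha) as [->|]; [exfalso; apply Ht; simpl; auto|].
        destruct (Req_dec t beta) as [->|]; [exfalso; apply Ht; simpl; auto|].
        destruct (Hsm t ltac:(lra)) as [[p [q [m [c [? [? [? [? Hpc]]]]]]]]|Hin].
        -- exists (Rmin (t - p) (q - t)), m, c. split. apply Rmin_glb_lt; lra. split; auto.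
           intros s Hs. assert (Hm1 := Rmin_l (t - p) (q - t)). assert (Hm2 := Rmin_r (t - p) (q - t)).
           apply Hpc; lra.
        -- exfalso. apply Ht. simpl; auto.
  - intros t. destruct (classic (IS t)) as [Ht|Ht]; [|rewrite Hqo; tauto].
    unfold IS in Ht. destruct (Hrp t ltac:(lra)) as [p [q [m [c [_ [? [Hap [Hafp [Hm Hpc]]]]]]]]].
    assert (Hc : c = f p - m * p) by (rewrite Hpc; [ring|lra]).
    assert (Hcc : A c) by (rewrite Hc; apply Asub; auto).
    rewrite (Hpc t) by lra. pose proof (Lpos _ Hm). split; intro HH.
    + auto.
    + replace t with (/ m * (m * t + c + - c)) by (field; lra). auto.
  - intros v. destruct (classic (inDom r v)) as [Hv|Hv].
    + exists (g v); auto.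
    + exists v; auto.
Qed.


End Conv2.

Section Recon.
Context {St : Sett}.
Local Notation r := sr.
Local Notation Lam := sLam.
Local Notation A := sA.
Local Notation alpha := salpha.
Local Notation beta := sbeta.
#[local] Hint Resolve L1 Lmul Linv A0 Aadd Aopp Amul Ar hAalpha hAbeta : core.

Definition inb (u v b : R) : bool := if Rlt_dec u b then if Rlt_dec b v then true else false else false.
Definition cnt (B : list R) u v := length (filter (inb u v) B).

Lemma inb_true u v b : inb u v b = true <-> u < b < v.
Proof. unfold inb. destruct (Rlt_dec u b); destruct (Rlt_dec b v); split; intros; try lra; auto; discriminate. Qed.

Lemma cnt_le B u v u' v' : u <= u' -> v' <= v -> (cnt B u' v' <= cnt B u v)%nat.
Proof.
  intros Hu Hv. unfold cnt. induction B as [|b B IH]; simpl; auto.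
  destruct (inb u' v' b) eqn:E1.
  - apply inb_true in E1. assert (E2 : inb u v b = true) by (apply inb_true; lra). rewrite E2. simpl. lia.
  - destruct (inb u v b); simpl; lia.
Qed.

Lemma cnt_strict B u v u' v' t : u <= u' -> v' <= v -> In t B -> u < t < v -> ~ (u' < t < v') ->
  (cnt B u' v' < cnt B u v)%nat.
Proof.
  intros Hu Hv Hin Ht Hn. unfold cnt. induction B as [|b B IH]; simpl in *; [contradiction|].
  destruct Hin as [<-|Hin].
  - assert (E1 : inb u' v' b = false) by (destruct (inb u' v' b) eqn:E; auto; apply inb_true in E; contradiction).
    assert (E2 : inb u v b = true) by (apply inb_true; auto). rewrite E1, E2. simpl.
    pose proof (cnt_le B u v u' v' Hu Hv). unfold cnt in H. lia.
  - specialize (IH Hin). destruct (inb u' v' b) eqn:E1.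
    + apply inb_true in E1. assert (E2 : inb u v b = true) by (apply inb_true; lra). rewrite E2. simpl. lia.
    + destruct (inb u v b); simpl; lia.
Qed.

Lemma aff_on f u v m c e : u < v -> 0 < e -> (forall s, u <= s < u + e -> f s = m * s + c) ->
  (forall t, u < t < v -> smooth f t) -> forall s, u <= s < v -> f s = m * s + c.
Proof.
  intros Huv He H0 Hsm.
  assert (H : forall s, u <= s <= v -> s < v -> f s = m * s + c).
  { apply (real_ind (fun s => s < v -> f s = m * s + c) u v); [lra|intros; apply H0; lra| |].
    - intros t Ht IH. destruct (Req_dec t u) as [->|Htu].
      + exists e. split; [auto|]. intros s Hs _. apply H0; lra.
      + destruct (Hsm t ltac:(lra)) as [e' [m' [c' [He' [_ Hl]]]]].
        set (t1 := Rmax u (t - e'/2)).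
        assert (Ht1 : u <= t1) by apply Rmax_l. assert (Ht1' : t - e'/2 <= t1) by apply Rmax_r.
        assert (Ht1'' : t1 < t) by (unfold t1; apply Rmax_lub_lt; lra).
        assert (E1 : m' * t1 + c' = m * t1 + c) by (rewrite <- Hl by lra; apply IH; lra).
        assert (E2 : m' * t + c' = m * t + c) by (rewrite <- Hl by lra; apply IH; lra).
        destruct (line_eq m' c' m c t1 t ltac:(lra) E1 E2) as [-> ->].
        exists e'. split; [auto|]. intros s Hs _. apply Hl; lra.
    - intros t Ht IH Htv. destruct (Hsm t ltac:(lra)) as [e' [m' [c' [He' [_ Hl]]]]].
      set (t1 := Rmax u (t - e'/2)).
      assert (Ht1 : u <= t1) by apply Rmax_l. assert (Ht1' : t - e'/2 <= t1) by apply Rmax_r.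
      assert (Ht1'' : t1 < t) by (unfold t1; apply Rmax_lub_lt; lra).
      set (t2 := (t1 + t) / 2).
      assert (E1 : m' * t1 + c' = m * t1 + c) by (rewrite <- Hl by lra; apply IH; lra).
      assert (E2 : m' * t2 + c' = m * t2 + c) by (rewrite <- Hl by (unfold t2; lra); apply IH; unfold t2; lra).
      destruct (line_eq m' c' m c t1 t2 ltac:(unfold t2; lra) E1 E2) as [-> ->].
      apply Hl; lra. }
  intros s Hs. apply H; lra.
Qed.

Lemma build f : QQ f -> forall B, (forall t, ~ In t B -> smooth f t) ->
  forall n u v, u < v -> A u -> A v -> (cnt B u v <= n)%nat -> exists l, chainP f u l v.
Proof.
  intros Hf B HB. induction n as [|n IH]; intros u v Huv Hu Hv Hc;
  (destruct (classic (exists t, u < t < v /\ ~ smooth f t)) as [[t [Ht Hns]]|Hno]).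
  - exfalso. assert (HtB : In t B) by (destruct (classic (In t B)); auto; exfalso; auto).
    pose proof (cnt_strict B u v u t t ltac:(lra) ltac:(lra) HtB Ht ltac:(lra)). lia.
  - destruct (q_raff f Hf u) as [e [m [c [He [Hm Hpc]]]]].
    exists (v :: nil). simpl. split; [lra|]. split; [auto|]. split; [apply (proj1 (q_A f Hf u)); auto|].
    split; [|split; auto]. exists m, c. split; [auto|]. apply (aff_on f u v m c e); auto.
    intros t Ht. destruct (classic (smooth f t)); auto. exfalso; apply Hno; exists t; auto.
  - assert (HtB : In t B) by (destruct (classic (In t B)); auto; exfalso; auto).
    assert (HtA : A t) by (destruct (classic (A t)); auto; exfalso; apply Hns; apply (q_nA f Hf); auto).
    pose proof (cnt_strict B u v u t t ltac:(lra) ltac:(lra) HtB Ht ltac:(lra)).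
    pose proof (cnt_strict B u v t v t ltac:(lra) ltac:(lra) HtB Ht ltac:(lra)).
    destruct (IH u t ltac:(lra) Hu HtA ltac:(lia)) as [l1 Hl1].
    destruct (IH t v ltac:(lra) HtA Hv ltac:(lia)) as [l2 Hl2].
    exists (l1 ++ l2). apply (chain_app f u l1 t l2 v); auto.
  - destruct (q_raff f Hf u) as [e [m [c [He [Hm Hpc]]]]].
    exists (v :: nil). simpl. split; [lra|]. split; [auto|]. split; [apply (proj1 (q_A f Hf u)); auto|].
    split; [|split; auto]. exists m, c. split; [auto|]. apply (aff_on f u v m c e); auto.
    intros t Ht. destruct (classic (smooth f t)); auto. exfalso; apply Hno; exists t; auto.
Qed.

Lemma QQ_dom f : QQ f -> forall t, inDom r t -> inDom r (f t).
Proof.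
  intros Hf t Ht. assert (Hal := halpha). assert (Hbe := hbeta). assert (Hab := hab).
  destruct (classic (IS t)) as [Hi|Hi]; [|rewrite (q_out f Hf t Hi); auto].
  unfold IS in Hi. assert (f alpha = alpha) by (apply (q_out f Hf); unfold IS; lra).
  assert (f beta = beta) by (apply (q_out f Hf); unfold IS; lra).
  assert (f alpha < f t) by (apply QQ_mono; auto; lra).
  assert (f t < f beta) by (apply QQ_mono; auto; lra). unfold inDom; lra.
Qed.

Lemma QQ_limit f : QQ f -> cont_on_dom r f.
Proof.
  intros Hf t Ht eps Heps. destruct (QQ_cont f Hf t eps Heps) as [d [Hd H]].
  exists d. split; auto. intros x [Hx Hxd]. simpl in *. unfold Rdist in *. apply H; auto.
Qed.

Lemma QQ_F f : QQ f -> inF_S r Lam A IS f.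
Proof.
  intros Hf. assert (Hal := halpha). assert (Hbe := hbeta). assert (Hab := hab). assert (Hr0 := hr).
  assert (Hfi := QQ_inv f Hf).
  split; [split; [|split]|].
  - split; [apply QQ_dom; auto|]. split; [apply QQ_limit; auto|].
    exists (inv f). split; [apply QQ_dom; auto|]. split; [apply QQ_limit; auto|].
    split; intros; [apply inv_l|apply inv_r]; auto.
  - destruct (q_brk f Hf) as [B HB].
    destruct (build f Hf B HB (cnt B 0 r) 0 r Hr0 A0 Ar (le_n _)) as [l Hl].
    destruct (chain_to_nth f l 0 r Hl) as [Hlast [HA [Hinc Hp]]].
    exists (0 :: l). split; [destruct l; simpl in *; [destruct Hl; lra|lia]|].
    split; [reflexivity|]. auto.
  - intros t Ht. apply (q_out f Hf). unfold IS, inDom in *. lra.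
  - intros t Ht Hne. destruct (classic (IS t)); auto. exfalso; apply Hne; apply (q_out f Hf); auto.
Qed.

End Recon.

Section Dens.
Context {St : Sett}.
Local Notation r := sr.
Local Notation Lam := sLam.
Local Notation A := sA.
Local Notation alpha := salpha.
Local Notation beta := sbeta.
#[local] Hint Resolve L1 Lmul Linv A0 Aadd Aopp Amul Ar hAalpha hAbeta : core.

Lemma Lam_pow a n : Lam a -> Lam (a ^ n).
Proof. intros Ha. induction n; simpl; auto. Qed.

Lemma A_Zmul d : A d -> forall z, A (IZR z * d).
Proof.
  intros Hd z. induction z using Z.peano_ind.
  - simpl. replace (0 * d) with 0 by ring. auto.
  - rewrite succ_IZR. replace ((IZR z + 1) * d) with (IZR z * d + d) by ring. auto.
  - rewrite <- Z.sub_1_r, minus_IZR. replace ((IZR z - 1) * d) with (IZR z * d + - d) by ring. auto.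
Qed.

Lemma small_pos : forall eps, 0 < eps -> exists d, A d /\ 0 < d < eps.
Proof.
  intros eps Heps. destruct Lne as [a [Ha Ha1]]. pose proof (Lpos _ Ha). assert (Hr := hr).
  set (p := if Rlt_dec a 1 then a else / a).
  assert (Hp : Lam p /\ 0 < p < 1).
  { unfold p; destruct (Rlt_dec a 1). split; auto; lra. split; auto.
    split. apply Rinv_0_lt_compat; lra. rewrite <- Rinv_1. apply Rinv_lt_contravar; lra. }
  destruct Hp as [HpL Hp].
  set (d0 := Rabs (a * r - r)).
  assert (Hd0 : A d0).
  { unfold d0. unfold Rabs; destruct Rcase_abs. apply Aopp. apply Asub; auto. apply Asub; auto. }
  assert (Hd0p : 0 < d0).
  { unfold d0. apply Rabs_pos_lt. intro H1. apply Ha1. assert ((a - 1) * r = 0) by lra.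
    apply Rmult_integral in H0 as [H0|H0]; lra. }
  destruct (pow_lt_1_zero p ltac:(rewrite Rabs_right; lra) (eps / d0) ltac:(apply Rdiv_lt_0_compat; lra)) as [N HN].
  specialize (HN N (le_n _)). rewrite Rabs_right in HN by (left; apply pow_lt; lra).
  exists (p ^ N * d0). split; [apply Amul; auto; apply Lam_pow; auto|].
  split. apply Rmult_lt_0_compat; auto; apply pow_lt; lra.
  apply (Rmult_lt_compat_r d0) in HN; auto. unfold Rdiv in HN. rewrite Rmult_assoc, Rinv_l in HN; lra.
Qed.

Lemma density : forall a b, a < b -> exists t, A t /\ a < t < b.
Proof.
  intros a b Hab. destruct (small_pos (b - a) ltac:(lra)) as [d [Hd Hdp]].
  destruct (archimed (a / d)) as [H1 H2].
  exists (IZR (up (a / d)) * d). split; [apply A_Zmul; auto|].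
  assert (Ha : a = (a / d) * d) by (field; lra).
  split.
  - rewrite Ha at 1. apply Rmult_lt_compat_r; lra.
  - assert (IZR (up (a / d)) * d <= (a / d + 1) * d) by (apply Rmult_le_compat_r; lra).
    nra.
Qed.

End Dens.

Class XS {St : Sett} := {
  xx : R -> R;
  Hxx : QQ xx;
  hfix : forall t, IS t -> sA t -> xx t <> t
}.

Section Eq.
Context {St : Sett} {X : XS}.
Local Notation r := sr.
Local Notation Lam := sLam.
Local Notation A := sA.
Local Notation alpha := salpha.
Local Notation beta := sbeta.
Local Notation x := xx.
#[local] Hint Resolve L1 Lmul Linv A0 Aadd Aopp Amul Ar hAalpha hAbeta : core.

Definition comm (y : R -> R) := forall t, y (x t) = x (y t).
Definition Cx (y : R -> R) := QQ y /\ comm y.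

Lemma eq_C y z : Cx y -> Cx z -> forall e, 0 < e -> (forall s, alpha <= s < alpha + e -> y s = z s) ->
  forall t, y t = z t.
Proof.
  intros [Hy Cy] [Hz Cz] e He H0. assert (Hx := Hxx).
  assert (Hal := halpha). assert (Hbe := hbeta). assert (Hab := hab).
  assert (Hxa : x alpha = alpha) by (apply (q_out x Hx); unfold IS; lra).
  assert (Hm : forall s, alpha <= s <= beta -> y s = z s).
  { apply (real_ind (fun s => y s = z s) alpha beta); [lra|apply H0; lra| |].
    - intros t Ht IH. destruct (Req_dec t alpha) as [->|Hta].
      { exists e. split; [auto|]. intros s Hs; apply H0; lra. }
      destruct (classic (A t)) as [HA|HnA].
      + assert (Hxt : x t <> t) by (apply hfix; auto; unfold IS; lra).
        destruct (Rtotal_order t (x t)) as [Hlt|[Heq|Hgt]]; [| exfalso; apply Hxt; auto|].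
        * exists (x t - t). split; [lra|]. intros s Hs.
          set (w := inv x s). assert (Hw : x w = s) by apply (inv_r x Hx).
          assert (w < t) by (apply (QQ_lt x Hx); lra).
          assert (alpha < w) by (apply (QQ_lt x Hx); lra).
          rewrite <- Hw, Cy, Cz, IH; auto; lra.
        * assert (Hlt : x t < t) by lra.
          assert (Hpos : 0 < t - x t) by lra.
          destruct (QQ_cont x Hx t (t - x t) Hpos) as [d [Hd Hc]].
          exists d. split; [auto|]. intros s Hs.
          assert (Hxs : x s < t) by (specialize (Hc s ltac:(apply abs_lt; lra)); apply abs_lt in Hc; lra).
          assert (alpha < x s) by (rewrite <- Hxa; apply (QQ_lt x Hx); lra).
          apply (QQ_inj x Hx). rewrite <- Cy, <- Cz. apply IH; lra.
      + destruct (q_nA y Hy t HnA) as [e1 [m1 [c1 [He1 [_ H1]]]]].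
        destruct (q_nA z Hz t HnA) as [e2 [m2 [c2 [He2 [_ H2]]]]].
        set (t1 := Rmax alpha (t - Rmin e1 e2 / 2)).
        assert (Hmin1 := Rmin_l e1 e2). assert (Hmin2 := Rmin_r e1 e2).
        assert (Hmin3 : 0 < Rmin e1 e2) by (apply Rmin_glb_lt; auto).
        assert (Ht1 : alpha <= t1) by apply Rmax_l. assert (Ht1' : t - Rmin e1 e2 / 2 <= t1) by apply Rmax_r.
        assert (Ht1'' : t1 < t) by (unfold t1; apply Rmax_lub_lt; lra).
        assert (E1 : m1 * t1 + c1 = m2 * t1 + c2) by (rewrite <- H1, <- H2 by lra; apply IH; lra).
        assert (E2 : m1 * t + c1 = m2 * t + c2) by (rewrite <- H1, <- H2 by lra; apply IH; lra).
        destruct (line_eq m1 c1 m2 c2 t1 t ltac:(lra) E1 E2) as [-> ->].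
        exists (Rmin e1 e2). split; [auto|]. intros s Hs. rewrite H1, H2 by lra. auto.
    - intros t Ht IH.
      destruct (q_laff y Hy t) as [e1 [m1 [c1 [He1 [_ H1]]]]].
      destruct (q_laff z Hz t) as [e2 [m2 [c2 [He2 [_ H2]]]]].
      set (t1 := Rmax alpha (t - Rmin e1 e2 / 2)).
      assert (Hmin1 := Rmin_l e1 e2). assert (Hmin2 := Rmin_r e1 e2).
      assert (Hmin3 : 0 < Rmin e1 e2) by (apply Rmin_glb_lt; auto).
      assert (Ht1 : alpha <= t1) by apply Rmax_l. assert (Ht1' : t - Rmin e1 e2 / 2 <= t1) by apply Rmax_r.
      assert (Ht1'' : t1 < t) by (unfold t1; apply Rmax_lub_lt; lra).
      set (t2 := (t1 + t) / 2).
      assert (E1 : m1 * t1 + c1 = m2 * t1 + c2) by (rewrite <- H1, <- H2 by lra; apply IH; lra).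
      assert (E2 : m1 * t2 + c1 = m2 * t2 + c2) by (rewrite <- H1, <- H2 by (unfold t2; lra); apply IH; unfold t2; lra).
      destruct (line_eq m1 c1 m2 c2 t1 t2 ltac:(unfold t2; lra) E1 E2) as [-> ->].
      rewrite H1, H2 by lra. auto. }
  intros t. destruct (classic (alpha <= t <= beta)) as [Ht|Ht]; auto.
  rewrite (q_out y Hy), (q_out z Hz); auto; unfold IS; lra.
Qed.

End Eq.

Section Gen.
Context {St : Sett}.
Local Notation r := sr.
Local Notation Lam := sLam.
Local Notation A := sA.
Local Notation alpha := salpha.
Local Notation beta := sbeta.
#[local] Hint Resolve L1 Lmul Linv A0 Aadd Aopp Amul Ar hAalpha hAbeta : core.

Lemma smooth_ext f g t : (forall s, f s = g s) -> smooth f t -> smooth g t.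
Proof. intros H [e [m [c [He [Hm Hl]]]]]. exists e, m, c. repeat split; auto. intros; rewrite <- H; auto. Qed.

Lemma pre_aff f g u : smooth g u -> smooth (fun t => f (g t)) u -> smooth f (g u).
Proof.
  intros [e [m [c [He [Hm Hg]]]]] [e2 [m2 [c2 [He2 [Hm2 Hfg]]]]].
  pose proof (Lpos _ Hm).
  assert (Hgu : g u = m * u + c) by (apply Hg; lra).
  exists (m * Rmin e e2), (m2 / m), (c2 - m2 * c / m).
  assert (Hmin := Rmin_l e e2). assert (Hmin2 := Rmin_r e e2).
  assert (Hmp : 0 < Rmin e e2) by (apply Rmin_glb_lt; auto).
  split; [nra|]. split; [unfold Rdiv; auto|].
  intros w Hw. set (s := (w - c) / m).
  assert (Hs : s - u = (w - g u) / m) by (unfold s; rewrite Hgu; field; lra).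
  assert (Hb : Rabs (s - u) < Rmin e e2) by (rewrite Hs; apply div_bnd'; auto; apply abs_lt; lra).
  apply abs_lt in Hb.
  assert (Hgs : g s = w) by (rewrite Hg by lra; unfold s; field; lra).
  rewrite <- Hgs, Hfg by lra. rewrite Hgs. unfold s; field; lra.
Qed.

Lemma post_aff f h u : smooth h (f u) ->
  (forall eps, 0 < eps -> exists d, 0 < d /\ forall s, Rabs (s - u) < d -> Rabs (f s - f u) < eps) ->
  smooth (fun t => h (f t)) u -> smooth f u.
Proof.
  intros [e [m [c [He [Hm Hh]]]]] Hc [e2 [m2 [c2 [He2 [Hm2 Hhf]]]]].
  pose proof (Lpos _ Hm).
  destruct (Hc e He) as [d [Hd Hcd]].
  exists (Rmin d e2), (m2 / m), ((c2 - c) / m).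
  assert (Hmin := Rmin_l d e2). assert (Hmin2 := Rmin_r d e2).
  split; [apply Rmin_glb_lt; auto|]. split; [unfold Rdiv; auto|].
  intros s Hs. specialize (Hcd s ltac:(apply abs_lt; lra)). apply abs_lt in Hcd.
  specialize (Hhf s ltac:(lra)). rewrite Hh in Hhf by lra.
  apply (Rmult_eq_reg_l m); [|lra]. field_simplify; [|lra]. lra.
Qed.

Lemma iterF_S n g t : iterF (S n) g t = g (iterF n g t).
Proof. reflexivity. Qed.

Lemma iterF_comm n g t : iterF n g (g t) = g (iterF n g t).
Proof. induction n; simpl; auto. unfold rcomp. rewrite IHn. auto. Qed.

Lemma iterF_add k n g t : iterF (k + n) g t = iterF k g (iterF n g t).
Proof. induction k; simpl; auto. unfold rcomp. rewrite IHk. auto. Qed.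

Lemma iterF_QQ n g : QQ g -> QQ (iterF n g).
Proof.
  intros Hg. induction n.
  - apply QQ_id.
  - apply (QQ_comp (iterF n g) g); auto.
Qed.

Lemma pow_big lam : 1 < lam -> forall M, exists j, M < lam ^ j.
Proof.
  intros Hl M.
  assert (Habs : Rabs (/ lam) < 1).
  { rewrite Rabs_right by (left; apply Rinv_0_lt_compat; lra).
    rewrite <- Rinv_1. apply Rinv_lt_contravar; lra. }
  destruct (pow_lt_1_zero (/ lam) Habs (/ (Rabs M + 1))) as [N HN].
  { apply Rinv_0_lt_compat. pose proof (Rabs_pos M); lra. }
  specialize (HN N (le_n _)). exists N.
  rewrite pow_inv, Rabs_right in HN by (left; apply Rinv_0_lt_compat, pow_lt; lra).
  assert (Hp : 0 < lam ^ N) by (apply pow_lt; lra).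
  assert (HM : 0 < Rabs M + 1) by (pose proof (Rabs_pos M); lra).
  apply Rinv_lt_contravar in HN; [|apply Rmult_lt_0_compat; apply Rinv_0_lt_compat; auto].
  rewrite !Rinv_inv in HN. pose proof (Rle_abs M). lra.
Qed.

End Gen.

Section Slopes.
Context {St : Sett} {X : XS}.
Local Notation r := sr.
Local Notation Lam := sLam.
Local Notation A := sA.
Local Notation alpha := salpha.
Local Notation beta := sbeta.
Local Notation x := xx.
#[local] Hint Resolve L1 Lmul Linv A0 Aadd Aopp Amul Ar hAalpha hAbeta : core.

Definition hasSl (y : R -> R) m := exists e, 0 < e /\
  forall s, alpha <= s < alpha + e -> y s = alpha + m * (s - alpha).

Lemma QQ_slope y : QQ y -> exists m, Lam m /\ hasSl y m.
Proof.
  intros Hy. destruct (q_raff y Hy alpha) as [e [m [c [He [Hm H]]]]].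
  assert (Hya : y alpha = alpha) by (apply (q_out y Hy); unfold IS; lra).
  rewrite H in Hya by lra.
  exists m. split; auto. exists e. split; auto. intros s Hs. rewrite H by lra. lra.
Qed.

Lemma hasSl_uniq y m1 m2 : hasSl y m1 -> hasSl y m2 -> m1 = m2.
Proof.
  intros [e1 [He1 H1]] [e2 [He2 H2]].
  set (s := alpha + Rmin e1 e2 / 2).
  assert (Hm := Rmin_l e1 e2). assert (Hm2 := Rmin_r e1 e2).
  assert (Hp : 0 < Rmin e1 e2) by (apply Rmin_glb_lt; auto).
  assert (E : alpha + m1 * (s - alpha) = alpha + m2 * (s - alpha)) by (rewrite <- H1, <- H2; unfold s; auto; lra).
  assert (Hs : s - alpha <> 0) by (unfold s; lra).
  apply (Rmult_eq_reg_r (s - alpha)); auto. lra.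
Qed.

Lemma hasSl_comp y z m n : 0 < m -> hasSl y m -> hasSl z n -> hasSl (fun t => z (y t)) (n * m).
Proof.
  intros Hm [e1 [He1 H1]] [e2 [He2 H2]].
  exists (Rmin e1 (e2 / m)). split.
  { apply Rmin_glb_lt; auto. apply Rdiv_lt_0_compat; auto. }
  intros s Hs. assert (Hb1 := Rmin_l e1 (e2 / m)). assert (Hb2 := Rmin_r e1 (e2 / m)).
  rewrite H1 by lra. rewrite H2. ring.
  split. assert (0 <= m * (s - alpha)) by (apply Rmult_le_pos; lra). lra.
  assert (s - alpha < e2 / m) by lra.
  apply (Rmult_lt_compat_l m) in H; auto. unfold Rdiv in H.
  rewrite <- Rmult_assoc, (Rmult_comm m e2), Rmult_assoc, Rinv_r in H; lra.
Qed.

Lemma hasSl_inv y m : QQ y -> 0 < m -> hasSl y m -> hasSl (inv y) (/ m).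
Proof.
  intros Hy Hm [e [He H]]. exists (m * e). split; [nra|].
  intros s Hs. set (w := alpha + (s - alpha) / m).
  assert (Hw : 0 <= (s - alpha) / m < e) by (apply div_bnd; auto; lra).
  assert (Hyw : y w = s) by (rewrite H; [unfold w; field; lra|unfold w; lra]).
  rewrite <- Hyw, inv_l by auto. rewrite Hyw. unfold w. field. lra.
Qed.

Lemma hasSl_id : hasSl (fun t => t) 1.
Proof. exists 1. split; [lra|]. intros; ring. Qed.

Lemma hasSl_iter g m n : 0 < m -> hasSl g m -> hasSl (iterF n g) (m ^ n).
Proof.
  intros Hm Hg. induction n.
  - simpl. apply hasSl_id.
  - simpl. unfold rcomp. replace (m * m ^ n) with (m * m ^ n) by ring.
    apply (hasSl_comp (iterF n g) g (m ^ n) m); auto. apply pow_lt; auto.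
Qed.


Lemma Cx_comp y z : Cx y -> Cx z -> Cx (fun t => z (y t)).
Proof.
  intros [Hy Cy] [Hz Cz]. split; [apply QQ_comp; auto|]. intros t. rewrite Cy, Cz. auto.
Qed.

Lemma Cx_inv y : Cx y -> Cx (inv y).
Proof.
  intros [Hy Cy]. split; [apply QQ_inv; auto|]. intros t. apply (QQ_inj y Hy).
  rewrite inv_r, Cy, inv_r by auto. auto.
Qed.

Lemma Cx_id : Cx (fun t => t).
Proof. split; [apply QQ_id|]. intros t; auto. Qed.

Lemma Cx_x : Cx x.
Proof. split; [apply Hxx|]. intros t; auto. Qed.

Lemma Cx_iter n y : Cx y -> Cx (iterF n y).
Proof.
  intros Hy. induction n.
  - apply Cx_id.
  - apply (Cx_comp (iterF n y) y); auto.
Qed.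

Definition Sset nu := exists y, Cx y /\ hasSl y nu.

Lemma Sset_pos nu : Sset nu -> 0 < nu.
Proof.
  intros [y [[Hy _] Hs]]. destruct (QQ_slope y Hy) as [m [Hm Hs']].
  rewrite (hasSl_uniq y nu m); auto. apply Lpos; auto.
Qed.

Lemma Sset_mul a b : Sset a -> Sset b -> Sset (a * b).
Proof.
  intros Ha Hb. pose proof (Sset_pos a Ha). destruct Ha as [y [Cy Hy]]. destruct Hb as [z [Cz Hz]].
  exists (fun t => z (y t)). split; [apply Cx_comp; auto|].
  rewrite Rmult_comm. apply hasSl_comp; auto.
Qed.

Lemma Sset_inv a : Sset a -> Sset (/ a).
Proof.
  intros Ha. pose proof (Sset_pos a Ha). destruct Ha as [y [Cy Hy]].
  exists (inv y). split; [apply Cx_inv; auto|]. apply hasSl_inv; auto. apply Cy.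
Qed.

Lemma Sset_1 : Sset 1.
Proof. exists (fun t => t). split; [apply Cx_id|apply hasSl_id]. Qed.

Lemma Sset_pow a n : Sset a -> Sset (a ^ n).
Proof. intros Ha. induction n; simpl; [apply Sset_1|apply Sset_mul; auto]. Qed.

Lemma slope_eq y z nu : Cx y -> Cx z -> hasSl y nu -> hasSl z nu -> forall t, y t = z t.
Proof.
  intros Cy Cz [e1 [He1 H1]] [e2 [He2 H2]].
  apply (eq_C y z Cy Cz (Rmin e1 e2)). apply Rmin_glb_lt; auto.
  intros s Hs. assert (Hm := Rmin_l e1 e2). assert (Hm2 := Rmin_r e1 e2).
  rewrite H1, H2 by lra. auto.
Qed.

End Slopes.

Section Dyn.
Context {St : Sett} {X : XS}.
Local Notation r := sr.
Local Notation Lam := sLam.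
Local Notation A := sA.
Local Notation alpha := salpha.
Local Notation beta := sbeta.
Local Notation x := xx.
#[local] Hint Resolve L1 Lmul Linv A0 Aadd Aopp Amul Ar hAalpha hAbeta : core.

Variables (lam ex : R).
Hypothesis Hlam1 : 1 < lam.
Hypothesis HlamL : Lam lam.
Hypothesis Hex : 0 < ex.
Hypothesis Hxz : forall s, alpha <= s < alpha + ex -> x s = alpha + lam * (s - alpha).

Lemma x_alpha : x alpha = alpha.
Proof. apply (q_out x Hxx). unfold IS; lra. Qed.

Lemma x_beta : x beta = beta.
Proof. apply (q_out x Hxx). unfold IS; lra. Qed.

Lemma ex_le : alpha + ex <= beta.
Proof.
  destruct (Rle_dec (alpha + ex) beta) as [|H]; auto. exfalso.
  assert (Hab := hab).
  assert (E : x beta = alpha + lam * (beta - alpha)) by (apply Hxz; lra).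
  rewrite x_beta in E. nra.
Qed.

Lemma bp_exists : exists bp, alpha + ex <= bp <= beta /\ x bp = bp /\ forall t, alpha < t < bp -> t < x t.
Proof.
  assert (Hab := hab). assert (Hx := Hxx). assert (Hexl := ex_le).
  set (E := fun w => alpha <= w <= beta /\ forall t, alpha < t <= w -> t < x t).
  assert (Hb : bound E) by (exists beta; intros w [Hw _]; lra).
  assert (He : exists w, E w) by (exists alpha; split; [lra|intros; lra]).
  destruct (completeness E Hb He) as [S [HS1 HS2]].
  assert (H1 : forall t, alpha < t < S -> t < x t).
  { intros t Ht. destruct (classic (exists w, E w /\ t < w)) as [[w [[_ Hw] Htw]]|Hn].
    - apply Hw; lra.
    - exfalso. assert (S <= t). { apply HS2. intros w Ew. destruct (Rle_dec w t) as [|Hwt]; auto.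
        exfalso; apply Hn; exists w; split; auto; lra. } lra. }
  assert (Hz : forall w, alpha <= w < alpha + ex -> E w).
  { intros w Hw. split; [lra|]. intros t Ht. rewrite Hxz by lra. nra. }
  assert (HSex : alpha + ex <= S).
  { destruct (Rle_dec (alpha + ex) S) as [|Hn]; auto. exfalso.
    assert (HSa : alpha <= S) by (apply HS1; apply Hz; lra).
    assert (S >= (S + alpha + ex) / 2) by (apply Rle_ge, HS1, Hz; lra). lra. }
  assert (HSb : S <= beta) by (apply HS2; intros w [Hw _]; lra).
  exists S. split; [lra|]. split; [|auto].
  destruct (Req_dec S beta) as [->|HSb']; [apply x_beta|].
  destruct (Rtotal_order (x S) S) as [Hlt|[Heq|Hgt]]; auto; exfalso.
  - assert (Heps : 0 < (S - x S) / 2) by lra.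
    destruct (QQ_cont x Hx S _ Heps) as [d [Hd Hc]].
    set (dd := Rmin d (Rmin ((S - x S) / 2) (S - alpha))).
    assert (Hdd1 : dd <= d) by apply Rmin_l.
    assert (Hdd3 : dd <= (S - x S) / 2) by (eapply Rle_trans; [apply Rmin_r|apply Rmin_l]).
    assert (Hdd4 : dd <= S - alpha) by (eapply Rle_trans; [apply Rmin_r|apply Rmin_r]).
    assert (Hddp : 0 < dd) by (unfold dd; repeat apply Rmin_glb_lt; lra).
    clearbody dd.
    set (s := S - dd / 2).
    assert (Hs : Rabs (s - S) < d) by (apply abs_lt; unfold s; lra).
    specialize (Hc s Hs). apply abs_lt in Hc.
    assert (s < x s) by (apply H1; unfold s; lra).
    unfold s in *. lra.
  - assert (Heps : 0 < (x S - S) / 2) by lra.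
    destruct (QQ_cont x Hx S _ Heps) as [d [Hd Hc]].
    set (dd := Rmin d (Rmin ((x S - S) / 2) (beta - S))).
    assert (Hdd1 : dd <= d) by apply Rmin_l.
    assert (Hdd3 : dd <= (x S - S) / 2) by (eapply Rle_trans; [apply Rmin_r|apply Rmin_l]).
    assert (Hdd4 : dd <= beta - S) by (eapply Rle_trans; [apply Rmin_r|apply Rmin_r]).
    assert (Hddp : 0 < dd) by (unfold dd; repeat apply Rmin_glb_lt; lra).
    clearbody dd.
    set (w := S + dd / 2).
    assert (Ew : E w).
    { split; [unfold w; lra|]. intros t Ht.
      destruct (Rtotal_order t S) as [HtS|[HtS|HtS]].
      - apply H1; lra.
      - subst t. auto.
      - assert (Hts : Rabs (t - S) < d) by (apply abs_lt; unfold w in Ht; lra).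
        specialize (Hc t Hts). apply abs_lt in Hc. unfold w in Ht. lra. }
    specialize (HS1 w Ew). unfold w in HS1. lra.
Qed.

End Dyn.

Section Dyn2.
Context {St : Sett} {X : XS}.
Local Notation r := sr.
Local Notation Lam := sLam.
Local Notation A := sA.
Local Notation alpha := salpha.
Local Notation beta := sbeta.
Local Notation x := xx.
#[local] Hint Resolve L1 Lmul Linv A0 Aadd Aopp Amul Ar hAalpha hAbeta : core.

Lemma zone_bp bp : alpha < bp -> x bp = bp -> (forall t, alpha < t < bp -> t < x t) ->
  exists lam' e', lam' < 1 /\ Lam lam' /\ 0 < e' /\ e' <= bp - alpha /\
    forall s, bp - e' < s <= bp -> x s = bp + lam' * (s - bp).
Proof.
  intros Hbp Hxb Hlt. destruct (q_laff x Hxx bp) as [e [m [c [He [Hm H]]]]].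
  rewrite H in Hxb by lra.
  set (e' := Rmin e (bp - alpha)).
  assert (He1 : e' <= e) by apply Rmin_l. assert (He2 : e' <= bp - alpha) by apply Rmin_r.
  assert (He3 : 0 < e') by (apply Rmin_glb_lt; lra). clearbody e'.
  assert (Hf : forall s, bp - e' < s <= bp -> x s = bp + m * (s - bp)).
  { intros s Hs. rewrite H by lra. lra. }
  exists m, e'. split; [|repeat split; auto].
  set (s := bp - e' / 2). assert (Hs := Hlt s ltac:(unfold s; lra)).
  rewrite Hf in Hs by (unfold s; lra). unfold s in Hs. nra.
Qed.

Variables (lam ex bp lam' e' : R).
Hypothesis Hlam1 : 1 < lam.
Hypothesis HlamL : Lam lam.
Hypothesis Hex : 0 < ex.
Hypothesis Hxz : forall s, alpha <= s < alpha + ex -> x s = alpha + lam * (s - alpha).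
Hypothesis Hbp1 : alpha + ex <= bp <= beta.
Hypothesis Hbp2 : x bp = bp.
Hypothesis Hbp3 : forall t, alpha < t < bp -> t < x t.
Hypothesis Hl'1 : lam' < 1.
Hypothesis Hl'L : Lam lam'.
Hypothesis He' : 0 < e'.
Hypothesis He'b : e' <= bp - alpha.
Hypothesis Hxb : forall s, bp - e' < s <= bp -> x s = bp + lam' * (s - bp).

Definition Zn d s := bp - d < s < bp.

Lemma x_in t : alpha < t < bp -> t < x t < bp.
Proof.
  intros Ht. split; [apply Hbp3; auto|]. rewrite <- Hbp2. apply (QQ_mono x Hxx). lra.
Qed.

Lemma iter_in n t : alpha < t < bp -> alpha < iterF n x t < bp.
Proof.
  intros Ht. induction n; simpl; auto. unfold rcomp. pose proof (x_in _ IHn). lra.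
Qed.

Lemma iter_incr n t : alpha < t < bp -> iterF n x t < iterF (S n) x t.
Proof. intros Ht. simpl. unfold rcomp. apply x_in. apply iter_in; auto. Qed.

Lemma iter_mono n m t : alpha < t < bp -> (n <= m)%nat -> iterF n x t <= iterF m x t.
Proof.
  intros Ht Hnm. induction Hnm; [lra|]. pose proof (iter_incr m t Ht). lra.
Qed.

Lemma orbit d : 0 < d -> forall q, alpha < q < bp -> exists N, forall n, (N <= n)%nat -> Zn d (iterF n x q).
Proof.
  intros Hd q Hq.
  assert (HN : exists N, bp - d < iterF N x q).
  { destruct (classic (exists N, bp - d < iterF N x q)) as [|Hn]; auto. exfalso.
    set (E := fun w => exists n, w = iterF n x q).
    assert (Hb : bound E).
    { exists (bp - d). intros w [n ->]. destruct (Rle_dec (iterF n x q) (bp - d)) as [|H]; auto.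
      exfalso; apply Hn; exists n; lra. }
    destruct (completeness E Hb (ex_intro _ q (ex_intro _ O eq_refl))) as [L [HL1 HL2]].
    assert (HLq : q <= L) by (apply HL1; exists O; auto).
    assert (HLb : L <= bp - d) by (apply HL2; intros w [n ->]; destruct (Rle_dec (iterF n x q) (bp - d)) as [|H]; auto;
       exfalso; apply Hn; exists n; lra).
    assert (HxL : L < x L) by (apply Hbp3; lra).
    assert (Heps : 0 < x L - L) by lra.
    destruct (QQ_cont x Hxx L _ Heps) as [dd [Hdd Hc]].
    destruct (classic (exists n, L - dd < iterF n x q)) as [[n Hn2]|Hn2].
    - assert (Hle : iterF n x q <= L) by (apply HL1; exists n; auto).
      specialize (Hc (iterF n x q) ltac:(apply abs_lt; lra)). apply abs_lt in Hc.
      assert (iterF (S n) x q <= L) by (apply HL1; exists (S n); auto).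
      simpl in H. unfold rcomp in H. lra.
    - assert (L <= L - dd). { apply HL2. intros w [n ->]. destruct (Rle_dec (iterF n x q) (L - dd)) as [|H]; auto.
        exfalso; apply Hn2; exists n; lra. } lra. }
  destruct HN as [N HN]. exists N. intros n Hn. split.
  - pose proof (iter_mono N n q Hq Hn). lra.
  - apply iter_in; auto.
Qed.

End Dyn2.

Section Ess.
Context {St : Sett} {X : XS}.
Local Notation r := sr.
Local Notation Lam := sLam.
Local Notation A := sA.
Local Notation alpha := salpha.
Local Notation beta := sbeta.
Local Notation x := xx.
#[local] Hint Resolve L1 Lmul Linv A0 Aadd Aopp Amul Ar hAalpha hAbeta : core.

Variables (lam ex bp lam' e' : R).
Hypothesis Hlam1 : 1 < lam.
Hypothesis HlamL : Lam lam.
Hypothesis Hex : 0 < ex.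
Hypothesis Hxz : forall s, alpha <= s < alpha + ex -> x s = alpha + lam * (s - alpha).
Hypothesis Hbp1 : alpha + ex <= bp <= beta.
Hypothesis Hbp2 : x bp = bp.
Hypothesis Hbp3 : forall t, alpha < t < bp -> t < x t.
Hypothesis Hl'1 : lam' < 1.
Hypothesis Hl'L : Lam lam'.
Hypothesis He' : 0 < e'.
Hypothesis He'b : e' <= bp - alpha.
Hypothesis Hxb : forall s, bp - e' < s <= bp -> x s = bp + lam' * (s - bp).

Local Notation Z := (Zn bp e').

Lemma Z_iter k s : Z s -> Z (iterF k x s) /\ iterF k x s = bp + lam' ^ k * (s - bp).
Proof.
  intros Hs. pose proof (Lpos _ Hl'L). unfold Zn in *. induction k.
  - simpl. split; [auto|ring].
  - destruct IHk as [Hk Ek]. simpl. unfold rcomp. rewrite Hxb by lra. rewrite Ek. split.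
    + assert (0 < lam' ^ k) by (apply pow_lt; auto). nra.
    + ring.
Qed.

Lemma Z_iter_smooth k s : Z s -> smooth (iterF k x) s.
Proof.
  intros Hs. unfold Zn in Hs. exists (Rmin (s - (bp - e')) (bp - s)), (lam' ^ k), (bp - lam' ^ k * bp).
  assert (H1 := Rmin_l (s - (bp - e')) (bp - s)). assert (H2 := Rmin_r (s - (bp - e')) (bp - s)).
  split; [apply Rmin_glb_lt; lra|]. split; [apply Lam_pow; auto|].
  intros w Hw. rewrite (proj2 (Z_iter k w ltac:(unfold Zn; lra))). ring.
Qed.

Definition Ess u := exists n, Z (iterF n x u) /\ ~ smooth (iterF n x) u.

Lemma stab n k u : Z (iterF n x u) -> (smooth (iterF n x) u <-> smooth (iterF (k + n) x) u).
Proof.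
  intros HZ. split; intros H.
  - apply (smooth_ext (fun t => iterF k x (iterF n x t))). intros; rewrite iterF_add; auto.
    apply smooth_comp; auto. apply Z_iter_smooth; auto.
  - apply (post_aff (iterF n x) (iterF k x) u). apply Z_iter_smooth; auto.
    apply QQ_cont, iterF_QQ, Hxx.
    apply (smooth_ext (iterF (k + n) x)); auto. intros; rewrite iterF_add; auto.
Qed.

Lemma Ess_all u m : Ess u -> Z (iterF m x u) -> ~ smooth (iterF m x) u.
Proof.
  intros [n [Hn Hns]] Hm. destruct (Nat.le_gt_cases n m) as [Hle|Hgt].
  - replace m with ((m - n) + n)%nat by lia. rewrite <- stab; auto.
  - replace n with ((n - m) + m)%nat in Hns by lia. rewrite <- stab in Hns; auto.
Qed.

Lemma Ess_def u m : Z (iterF m x u) -> ~ smooth (iterF m x) u -> Ess u.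
Proof. intros; exists m; auto. Qed.

Lemma x_smooth u : alpha < u < alpha + ex -> smooth x u.
Proof.
  intros Hu. exists (Rmin (u - alpha) (alpha + ex - u)), lam, (alpha - lam * alpha).
  assert (H1 := Rmin_l (u - alpha) (alpha + ex - u)). assert (H2 := Rmin_r (u - alpha) (alpha + ex - u)).
  split; [apply Rmin_glb_lt; lra|]. split; auto. intros s Hs. rewrite Hxz by lra. ring.
Qed.

Lemma Ess_x u : alpha < u < alpha + ex -> (Ess u <-> Ess (x u)).
Proof.
  intros Hu. assert (Hub : alpha < u < bp) by lra.
  pose proof (x_smooth u Hu) as Hsx.
  split.
  - intros HE. destruct (orbit bp Hbp2 Hbp3 e' He' u Hub) as [N HN].
    apply (Ess_def (x u) N).
    + rewrite iterF_comm. apply (HN (S N)). lia.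
    + intros Hs. apply (Ess_all u (S N) HE (HN (S N) ltac:(lia))).
      apply (smooth_ext (fun t => iterF N x (x t))). intros; rewrite iterF_comm; auto.
      apply smooth_comp; auto.
  - intros [n [Hn Hns]]. apply (Ess_def u (S n)).
    + rewrite iterF_comm in Hn. auto.
    + intros Hs. apply Hns. apply pre_aff; auto.
      apply (smooth_ext (iterF (S n) x)); auto. intros; rewrite iterF_comm; auto.
Qed.

Lemma iter_comm_y y n t : comm y -> iterF n x (y t) = y (iterF n x t).
Proof. intros Cy. induction n; simpl; auto. unfold rcomp. rewrite IHn, Cy. auto. Qed.

Lemma Ess_y y u : Cx y -> alpha < u < bp -> alpha < y u < bp -> smooth y u -> (Ess u <-> Ess (y u)).
Proof.
  intros [Hy Cy] Hu Hyu Hsy.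
  destruct (q_laff y Hy bp) as [ey [my [cy [Hey [Hmy Hly]]]]].
  set (d := Rmin e' ey). assert (Hd1 : d <= e') by apply Rmin_l. assert (Hd2 : d <= ey) by apply Rmin_r.
  assert (Hd : 0 < d) by (apply Rmin_glb_lt; auto). clearbody d.
  destruct (orbit bp Hbp2 Hbp3 d Hd u Hu) as [N1 HN1].
  destruct (orbit bp Hbp2 Hbp3 e' He' (y u) Hyu) as [N2 HN2].
  set (m := (N1 + N2)%nat).
  assert (Z1 := HN1 m ltac:(unfold m; lia)). assert (Z2 := HN2 m ltac:(unfold m; lia)).
  unfold Zn in Z1, Z2.
  assert (Hyz : smooth y (iterF m x u)).
  { exists (Rmin (iterF m x u - (bp - ey)) (bp - iterF m x u)), my, cy.
    assert (H1 := Rmin_l (iterF m x u - (bp - ey)) (bp - iterF m x u)).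
    assert (H2 := Rmin_r (iterF m x u - (bp - ey)) (bp - iterF m x u)).
    split; [apply Rmin_glb_lt; lra|]. split; auto. intros s Hs. apply Hly. lra. }
  assert (Key : smooth (iterF m x) (y u) <-> smooth (iterF m x) u).
  { split; intros H.
    - apply (post_aff (iterF m x) y u); auto. apply QQ_cont, iterF_QQ, Hxx.
      apply (smooth_ext (fun t => iterF m x (y t))). intros; apply iter_comm_y; auto.
      apply smooth_comp; auto.
    - apply pre_aff; auto. apply (smooth_ext (fun t => y (iterF m x t))). intros; rewrite iter_comm_y; auto.
      apply smooth_comp; auto. }
  assert (Zu : Z (iterF m x u)) by (unfold Zn; lra).
  assert (Zyu : Z (iterF m x (y u))) by (unfold Zn; lra).
  split; intros HE.
  - apply (Ess_def (y u) m Zyu). rewrite Key. apply Ess_all; auto.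
  - apply (Ess_def u m Zu). rewrite <- Key. apply Ess_all; auto.
Qed.

Lemma zone_iter j p : alpha <= p -> alpha + lam ^ j * (p - alpha) < alpha + ex ->
  iterF j x p = alpha + lam ^ j * (p - alpha).
Proof.
  intros Hp. induction j; intros Hj.
  - simpl. ring.
  - simpl. unfold rcomp. assert (Hl : lam ^ j <= lam * lam ^ j).
    { assert (0 < lam ^ j) by (apply pow_lt; lra). nra. }
    assert (0 <= lam ^ j * (p - alpha)) by (apply Rmult_le_pos; [left; apply pow_lt|]; lra).
    simpl in Hj. rewrite IHj by nra. rewrite Hxz. ring.
    split; [lra|]. nra.
Qed.

Lemma zone_ext y mu : Cx y -> hasSl y mu -> 0 < mu ->
  forall s, alpha <= s < alpha + ex -> alpha + mu * (s - alpha) < alpha + ex -> y s = alpha + mu * (s - alpha).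
Proof.
  intros [Hy Cy] [ey [Hey Hsl]] Hmu s Hs Hms.
  destruct (pow_big lam Hlam1 ((s - alpha) / ey)) as [j Hj].
  assert (Hlj : 0 < lam ^ j) by (apply pow_lt; lra).
  set (p := alpha + (s - alpha) / lam ^ j).
  assert (Hp0 : 0 <= (s - alpha) / lam ^ j) by (unfold Rdiv; apply Rmult_le_pos; [lra|left; apply Rinv_0_lt_compat; auto]).
  assert (Hp1 : (s - alpha) / lam ^ j < ey).
  { apply (Rmult_lt_reg_l (lam ^ j)); auto. unfold Rdiv. rewrite <- Rmult_assoc, (Rmult_comm (lam ^ j)), Rmult_assoc, Rinv_r by lra.
    apply (Rmult_lt_compat_r ey) in Hj; auto. unfold Rdiv in Hj. rewrite Rmult_assoc, Rinv_l in Hj by lra. lra. }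
  assert (Hps : lam ^ j * (p - alpha) = s - alpha) by (unfold p; field; lra).
  assert (Es : iterF j x p = s) by (rewrite zone_iter; unfold p in *; [lra|lra|lra]).
  rewrite <- Es at 1. rewrite <- (iter_comm_y y j p Cy).
  rewrite Hsl by (unfold p; lra).
  rewrite zone_iter.
  - rewrite <- Hps. ring.
  - assert (0 <= mu * (p - alpha)) by (apply Rmult_le_pos; unfold p; lra). lra.
  - replace (lam ^ j * (alpha + mu * (p - alpha) - alpha)) with (mu * (lam ^ j * (p - alpha))) by ring.
    rewrite Hps. lra.
Qed.

Lemma ext_smooth y mu u : Cx y -> hasSl y mu -> Lam mu -> alpha < u < alpha + ex ->
  alpha + mu * (u - alpha) < alpha + ex -> smooth y u.
Proof.
  intros Cy Hsl Hmu Hu Hmu2. pose proof (Lpos _ Hmu).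
  set (U := Rmin (u - alpha) (Rmin (alpha + ex - u) ((alpha + ex - (alpha + mu * (u - alpha))) / mu))).
  assert (HU1 : U <= u - alpha) by apply Rmin_l.
  assert (HU2 : U <= alpha + ex - u) by (eapply Rle_trans; [apply Rmin_r|apply Rmin_l]).
  assert (HU3 : U <= (alpha + ex - (alpha + mu * (u - alpha))) / mu) by (eapply Rle_trans; [apply Rmin_r|apply Rmin_r]).
  assert (HU : 0 < U) by (unfold U; repeat apply Rmin_glb_lt; try lra; apply Rdiv_lt_0_compat; lra).
  clearbody U.
  exists U, mu, (alpha - mu * alpha). split; auto. split; auto.
  intros s Hs. rewrite (zone_ext y mu Cy Hsl H s); [ring|lra|].
  assert (mu * U <= alpha + ex - (alpha + mu * (u - alpha))).
  { assert (Heq : mu * ((alpha + ex - (alpha + mu * (u - alpha))) / mu) = alpha + ex - (alpha + mu * (u - alpha))) by (field; lra).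
    apply (Rmult_le_compat_l mu) in HU3; lra. }
  nra.
Qed.

End Ess.

Lemma nodup_map_seq : forall n (f : nat -> R), (forall i j, (i < j < n)%nat -> f i <> f j) -> NoDup (map f (seq 0 n)).
Proof.
  induction n; intros f Hf.
  - constructor.
  - simpl. constructor.
    + intros Hin. rewrite <- seq_shift, map_map in Hin. apply in_map_iff in Hin.
      destruct Hin as [k [Hk Hin]]. apply in_seq in Hin. apply (Hf 0%nat (S k)); [lia|auto].
    + rewrite <- seq_shift, map_map. apply IHn. intros i j Hij. apply Hf. lia.
Qed.

Lemma pigeon (L : list R) (P : nat -> R -> Prop) :
  (forall k, (k <= length L)%nat -> exists v, In v L /\ P k v) ->
  exists i j v, (i < j <= length L)%nat /\ P i v /\ P j v.
Proof.
  intros H. set (n := length L).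
  set (f := fun k => epsilon (inhabits 0) (fun v => In v L /\ P k v)).
  assert (Hf : forall k, (k <= n)%nat -> In (f k) L /\ P k (f k)).
  { intros k Hk. unfold f. apply epsilon_spec. apply H; auto. }
  destruct (classic (exists i j, (i < j <= n)%nat /\ f i = f j)) as [[i [j [Hij Heq]]]|Hn].
  - exists i, j, (f i). split; auto. split. apply Hf; lia. rewrite Heq. apply Hf; lia.
  - exfalso. assert (HND : NoDup (map f (seq 0 (S n)))).
    { apply nodup_map_seq. intros i j Hij Heq. apply Hn. exists i, j. split; auto. lia. }
    assert (Hincl : incl (map f (seq 0 (S n))) L).
    { intros v Hv. apply in_map_iff in Hv. destruct Hv as [k [<- Hk]]. apply in_seq in Hk. apply Hf. lia. }
    pose proof (NoDup_incl_length HND Hincl). rewrite length_map, length_seq in H0. unfold n in H0. lia.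
Qed.

Lemma fact_div : forall n k, (1 <= k <= n)%nat -> exists t, fact n = (k * t)%nat.
Proof.
  induction n; intros k Hk; [lia|].
  destruct (Nat.eq_dec k (S n)) as [->|Hne].
  - exists (fact n). reflexivity.
  - destruct (IHn k ltac:(lia)) as [t Ht]. exists (S n * t)%nat. simpl fact. rewrite Ht. lia.
Qed.

Lemma floor_Z z : exists w : Z, IZR w <= z < IZR w + 1.
Proof.
  destruct (archimed z) as [H1 H2]. exists (up z - 1)%Z. rewrite minus_IZR. simpl. lra.
Qed.

Section Main.
Context {St : Sett} {X : XS}.
Local Notation r := sr.
Local Notation Lam := sLam.
Local Notation A := sA.
Local Notation alpha := salpha.
Local Notation beta := sbeta.
Local Notation x := xx.
#[local] Hint Resolve L1 Lmul Linv A0 Aadd Aopp Amul Ar hAalpha hAbeta : core.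

Definition LS l := Sset (exp l).

Lemma LS_add a b : LS a -> LS b -> LS (a + b).
Proof. unfold LS; intros. rewrite exp_plus. apply Sset_mul; auto. Qed.
Lemma LS_opp a : LS a -> LS (- a).
Proof. unfold LS; intros. rewrite exp_Ropp. apply Sset_inv; auto. Qed.
Lemma LS_0 : LS 0.
Proof. unfold LS. rewrite exp_0. apply Sset_1. Qed.
Lemma LS_Z a : LS a -> forall z, LS (IZR z * a).
Proof.
  intros Ha z. induction z using Z.peano_ind.
  - simpl. rewrite Rmult_0_l. apply LS_0.
  - rewrite succ_IZR. replace ((IZR z + 1) * a) with (IZR z * a + a) by ring. apply LS_add; auto.
  - rewrite <- Z.sub_1_r, minus_IZR. replace ((IZR z - 1) * a) with (IZR z * a + - a) by ring.
    apply LS_add; auto. apply LS_opp; auto.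
Qed.
Lemma LS_N a : LS a -> forall n, LS (INR n * a).
Proof. intros Ha n. rewrite INR_IZR_INZ. apply LS_Z; auto. Qed.
Lemma LS_of nu : Sset nu -> LS (ln nu).
Proof. intros H. unfold LS. rewrite exp_ln; auto. apply Sset_pos; auto. Qed.

Variables (lam ex bp lam' e' : R).
Hypothesis Hlam1 : 1 < lam.
Hypothesis HlamL : Lam lam.
Hypothesis Hex : 0 < ex.
Hypothesis Hxz : forall s, alpha <= s < alpha + ex -> x s = alpha + lam * (s - alpha).
Hypothesis Hbp1 : alpha + ex <= bp <= beta.
Hypothesis Hbp2 : x bp = bp.
Hypothesis Hbp3 : forall t, alpha < t < bp -> t < x t.
Hypothesis Hl'1 : lam' < 1.
Hypothesis Hl'L : Lam lam'.
Hypothesis He' : 0 < e'.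
Hypothesis He'b : e' <= bp - alpha.
Hypothesis Hxb : forall s, bp - e' < s <= bp -> x s = bp + lam' * (s - bp).

Local Notation ZZ := (Zn bp e').
Local Notation EssX := (Ess bp e').

Lemma Sset_lam : Sset lam.
Proof. exists x. split; [apply Cx_x|]. exists ex. split; auto. Qed.

Definition q := alpha + ex / (lam * lam + 1).

Lemma q_facts : alpha < q /\ lam * lam * (q - alpha) < ex.
Proof.
  unfold q. assert (H : 0 < lam * lam + 1) by nra.
  split. assert (0 < ex / (lam * lam + 1)) by (apply Rdiv_lt_0_compat; lra). lra.
  replace (alpha + ex / (lam * lam + 1) - alpha) with (ex / (lam * lam + 1)) by ring.
  assert (E : lam * lam * (ex / (lam * lam + 1)) = ex - ex / (lam * lam + 1)) by (field; lra).
  rewrite E. assert (0 < ex / (lam * lam + 1)) by (apply Rdiv_lt_0_compat; lra). lra.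
Qed.

Lemma xq : x q = alpha + lam * (q - alpha).
Proof. destruct q_facts. assert (1 < lam * lam) by nra. apply Hxz. split; [lra|]. nra. Qed.

Lemma xxq : x (x q) = alpha + lam * lam * (q - alpha).
Proof. destruct q_facts. assert (1 < lam * lam) by nra. rewrite xq, Hxz. ring. split; nra. Qed.

Lemma N_exists : exists N, forall u, q <= u <= x q -> ZZ (iterF N x u).
Proof.
  destruct q_facts as [Hq1 Hq2].
  assert (1 < lam * lam) by nra.
  assert (Hqb : alpha < q < bp) by nra.
  destruct (orbit bp Hbp2 Hbp3 e' He' q Hqb) as [N HN].
  exists N. intros u Hu. pose proof (HN N (le_n _)) as H1. pose proof (HN (S N) (le_S _ _ (le_n _))) as H2.
  unfold Zn in *.
  assert (HQ := iterF_QQ N x Hxx).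
  assert (Ha1 : iterF N x q <= iterF N x u) by (apply (QQ_le _ HQ); lra).
  assert (Ha2 : iterF N x u <= iterF N x (x q)) by (apply (QQ_le _ HQ); lra).
  rewrite iterF_comm in Ha2. simpl in H2. unfold rcomp in H2. lra.
Qed.

Lemma K_ne : exists u0, q <= u0 < x q /\ EssX u0.
Proof.
  destruct N_exists as [N HN]. destruct q_facts as [Hq1 Hq2].
  assert (Hll : 1 < lam * lam) by nra.
  assert (Hxq := xq). assert (Hxxq := xxq).
  assert (Hqz : alpha < q < alpha + ex) by nra.
  assert (Hqxq : q < x q) by (rewrite Hxq; nra).
  assert (Hxqe : x q < alpha + ex) by (rewrite Hxq; nra).
  destruct (classic (exists u0, q <= u0 < x q /\ EssX u0)) as [|Hno]; auto. exfalso.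
  set (Phi := iterF N x).
  assert (Hsm : forall u, q <= u <= x q -> smooth Phi u).
  { intros u Hu. destruct (classic (smooth Phi u)) as [|Hns]; auto. exfalso.
    assert (HE : EssX u) by (apply (Ess_def bp e' u N); auto).
    destruct (Req_dec u (x q)) as [Heq|Hne].
    - rewrite Heq in HE. rewrite <- (Ess_x lam ex bp lam' e' HlamL Hxz Hbp1 Hbp2 Hbp3 Hl'1 Hl'L He' Hxb q Hqz) in HE.
      apply Hno. exists q. split; auto. lra.
    - apply Hno. exists u. split; auto. lra. }
  destruct (Hsm q ltac:(lra)) as [e1 [m [c [He1 [Hm H1]]]]].
  pose proof (Lpos _ Hm).
  assert (Haff : forall s, q <= s < x q -> Phi s = m * s + c).
  { apply (aff_on Phi q (x q) m c e1); [lra|auto| |].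
    intros s Hs; apply H1; lra. intros t Ht; apply Hsm; lra. }
  assert (Hxq1 : q <= x q <= x q) by lra.
  destruct (Hsm (x q) Hxq1) as [e2 [m2 [c2 [He2 [Hm2 H2]]]]].
  set (t1 := Rmax q (x q - e2 / 2)).
  assert (Ht1 : q <= t1) by apply Rmax_l. assert (Ht1' : x q - e2 / 2 <= t1) by apply Rmax_r.
  assert (Ht1'' : t1 < x q) by (unfold t1; apply Rmax_lub_lt; lra). clearbody t1.
  set (t2 := (t1 + x q) / 2).
  assert (E1 : m2 * t1 + c2 = m * t1 + c) by (rewrite <- H2, <- Haff by lra; auto).
  assert (E2 : m2 * t2 + c2 = m * t2 + c) by (rewrite <- H2, <- Haff by (unfold t2; lra); auto).
  destruct (line_eq m2 c2 m c t1 t2 ltac:(unfold t2; lra) E1 E2) as [-> ->].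
  assert (Haff2 : forall s, x q <= s < x q + e2 -> Phi s = m * s + c) by (intros; apply H2; lra).
  set (d := Rmin (e2 / lam) (x q - q) / 2).
  assert (Hd1 : Rmin (e2 / lam) (x q - q) <= e2 / lam) by apply Rmin_l.
  assert (Hd2 : Rmin (e2 / lam) (x q - q) <= x q - q) by apply Rmin_r.
  assert (Hd3 : 0 < Rmin (e2 / lam) (x q - q)) by (apply Rmin_glb_lt; [apply Rdiv_lt_0_compat|]; lra).
  assert (Hd4 : lam * (e2 / lam) = e2) by (field; lra).
  assert (Hd : 0 < d) by (unfold d; lra).
  assert (Hlamd : lam * d < e2) by (unfold d; nra).
  assert (Hdq : d < x q - q) by (unfold d; lra).
  clearbody d.
  assert (Key : forall s, q <= s <= q + d -> m * (alpha + lam * (s - alpha)) + c = bp + lam' * (m * s + c - bp)).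
  { intros s Hs.
    assert (Hxs : x s = alpha + lam * (s - alpha)) by (apply Hxz; split; [lra|]; lra).
    assert (Hxs2 : x q <= x s < x q + e2) by (rewrite Hxs, Hxq; nra).
    rewrite <- Hxs, <- Haff2 by auto. unfold Phi. rewrite iterF_comm.
    assert (HZ := HN s ltac:(lra)). unfold Zn in HZ.
    rewrite Hxb by lra. fold Phi. rewrite Haff by lra. auto. }
  pose proof (Key q ltac:(lra)) as K1. pose proof (Key (q + d) ltac:(lra)) as K2.
  assert (Hz : (lam - lam') * m * d = 0) by nra.
  assert (0 < (lam - lam') * m * d) by (apply Rmult_lt_0_compat; [apply Rmult_lt_0_compat|]; lra).
  lra.
Qed.

Lemma roots : exists n0, forall nu, Sset nu -> exists k w, (1 <= k <= n0)%nat /\ INR k * ln nu = IZR w * ln lam.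
Proof.
  destruct N_exists as [N HN]. destruct q_facts as [Hq1 Hq2].
  assert (Hll : 1 < lam * lam) by nra.
  assert (Hxq := xq). assert (Hxxq := xxq).
  destruct (q_brk (iterF N x) (iterF_QQ N x Hxx)) as [B HB].
  destruct K_ne as [u0 [Hu0 HE0]].
  assert (Hfin : forall v, q <= v <= x q -> EssX v -> In v B).
  { intros v Hv HE. destruct (classic (In v B)) as [|Hn]; auto. exfalso.
    apply (Ess_all bp lam' e' Hl'1 Hl'L Hxb v N HE (HN v Hv)). apply HB; auto. }
  exists (length B). intros nu Hnu.
  assert (Hnup : 0 < nu) by (apply Sset_pos; auto).
  set (l := ln lam). assert (Hl : 0 < l) by (unfold l; rewrite <- ln_1; apply ln_increasing; lra).
  assert (Hexpl : exp l = lam) by (unfold l; apply exp_ln; lra).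
  set (P := fun k v => exists w : Z, v = alpha + exp (INR k * ln nu - IZR w * l) * (u0 - alpha)).
  assert (HP : forall k, (k <= length B)%nat -> exists v, In v B /\ P k v).
  { intros k Hk.
    assert (Hrat : 0 < (u0 - alpha) / (q - alpha)) by (apply Rdiv_lt_0_compat; lra).
    destruct (floor_Z ((ln ((u0 - alpha) / (q - alpha)) + INR k * ln nu) / l)) as [w Hw].
    set (E := INR k * ln nu - IZR w * l).
    set (v := alpha + exp E * (u0 - alpha)).
    assert (HE1 : 0 <= E + ln ((u0 - alpha) / (q - alpha)) < l).
    { assert (Hz : (ln ((u0 - alpha) / (q - alpha)) + INR k * ln nu) = l * ((ln ((u0 - alpha) / (q - alpha)) + INR k * ln nu) / l)) by (field; lra).
      unfold E. split; nra. }
    assert (Hv : exp E * (u0 - alpha) = (q - alpha) * exp (E + ln ((u0 - alpha) / (q - alpha)))).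
    { rewrite exp_plus, exp_ln by auto. field. lra. }
    assert (Hexp1 : 1 <= exp (E + ln ((u0 - alpha) / (q - alpha))) < lam).
    { rewrite <- exp_0, <- Hexpl. split.
      destruct (Req_dec 0 (E + ln ((u0 - alpha) / (q - alpha)))) as [<-|Hne]; [lra|left; apply exp_increasing; lra].
      apply exp_increasing; lra. }
    assert (Hvb : q <= v < x q).
    { unfold v. rewrite Hv, Hxq. split; nra. }
    assert (HS : Sset (exp E)).
    { unfold E. replace (INR k * ln nu - IZR w * l) with (INR k * ln nu + IZR (- w) * l) by (rewrite opp_IZR; ring).
      apply LS_add. apply LS_N, LS_of; auto. apply LS_Z. apply LS_of, Sset_lam. }
    destruct HS as [h [Ch Hh]].
    destruct (QQ_slope h (proj1 Ch)) as [mh [Hmh Hh']].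
    assert (Emh : exp E = mh) by (apply (hasSl_uniq h); auto). rewrite <- Emh in Hmh.
    assert (Hu0z : alpha < u0 < alpha + ex) by nra.
    assert (Hvz : alpha + exp E * (u0 - alpha) < alpha + ex) by (fold v; nra).
    assert (Hsh : smooth h u0) by (apply (ext_smooth lam ex Hlam1 Hxz h (exp E) u0); auto).
    assert (Hhu : h u0 = v) by (unfold v; rewrite (zone_ext lam ex Hlam1 Hxz h (exp E) Ch Hh (exp_pos E) u0); [ring|lra|auto]).
    assert (HEv : EssX v).
    { assert (Hxqe : x q < alpha + ex) by (rewrite Hxq; nra).
      assert (B1 : alpha < u0 < bp) by lra.
      assert (B2 : alpha < h u0 < bp) by (rewrite Hhu; lra).
      rewrite <- Hhu. rewrite <- (Ess_y bp lam' e' Hbp2 Hbp3 Hl'1 Hl'L He' Hxb h u0 Ch B1 B2 Hsh). auto. }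
    exists v. split. apply Hfin; auto; lra. exists w. reflexivity. }
  destruct (pigeon B P HP) as [i [j [v [Hij [[wi Hi] [wj Hj]]]]]].
  exists (j - i)%nat, (wj - wi)%Z. split; [lia|].
  rewrite Hi in Hj.
  assert (Heq : exp (INR i * ln nu - IZR wi * l) = exp (INR j * ln nu - IZR wj * l)).
  { apply (Rmult_eq_reg_r (u0 - alpha)); lra. }
  apply exp_inv in Heq. rewrite minus_INR by lia. rewrite minus_IZR. fold l. lra.
Qed.

Lemma rootM : exists M, (0 < M)%nat /\ forall nu, Sset nu -> exists w, INR M * ln nu = IZR w * ln lam.
Proof.
  destruct roots as [n0 Hn0]. exists (fact n0). split; [apply lt_O_fact|].
  intros nu Hnu. destruct (Hn0 nu Hnu) as [k [w [Hk E]]].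
  destruct (fact_div n0 k Hk) as [t Ht]. exists (Z.of_nat t * w)%Z.
  rewrite Ht, mult_INR, mult_IZR, <- INR_IZR_INZ.
  replace (INR k * INR t * ln nu) with (INR t * (INR k * ln nu)) by ring. rewrite E. ring.
Qed.

End Main.

Lemma min_nat (P : nat -> Prop) n : P n -> exists m, P m /\ forall k, (k < m)%nat -> ~ P k.
Proof.
  revert n. induction n as [n IH] using (well_founded_induction lt_wf). intros Hn.
  destruct (classic (exists k, (k < n)%nat /\ P k)) as [[k [Hk Pk]]|Hno].
  - apply (IH k Hk Pk).
  - exists n. split; auto. intros k Hk Pk. apply Hno. exists k; auto.
Qed.

Definition zpowP (g y : R -> R) (a : Z) : Prop :=
  match a with
  | Z0 => forall t, y t = t
  | Zpos p => forall t, y t = iterF (Pos.to_nat p) g t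
  | Zneg p => forall t, iterF (Pos.to_nat p) g (y t) = t
  end.

Section Fin.
Context {St : Sett} {X : XS}.
Local Notation r := sr.
Local Notation Lam := sLam.
Local Notation A := sA.
Local Notation alpha := salpha.
Local Notation beta := sbeta.
Local Notation x := xx.
#[local] Hint Resolve L1 Lmul Linv A0 Aadd Aopp Amul Ar hAalpha hAbeta : core.

Variables (lam ex bp lam' e' : R).
Hypothesis Hlam1 : 1 < lam.
Hypothesis HlamL : Lam lam.
Hypothesis Hex : 0 < ex.
Hypothesis Hxz : forall s, alpha <= s < alpha + ex -> x s = alpha + lam * (s - alpha).
Hypothesis Hbp1 : alpha + ex <= bp <= beta.
Hypothesis Hbp2 : x bp = bp.
Hypothesis Hbp3 : forall t, alpha < t < bp -> t < x t.
Hypothesis Hl'1 : lam' < 1.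
Hypothesis Hl'L : Lam lam'.
Hypothesis He' : 0 < e'.
Hypothesis He'b : e' <= bp - alpha.
Hypothesis Hxb : forall s, bp - e' < s <= bp -> x s = bp + lam' * (s - bp).

Lemma ML : exists g, Cx g /\ forall y, Cx y -> exists a, zpowP g y a.
Proof.
  destruct (rootM lam ex bp lam' e' Hlam1 HlamL Hex Hxz Hbp1 Hbp2 Hbp3 Hl'1 Hl'L He' Hxb) as [M [HM HMr]].
  set (l := ln lam). assert (Hl : 0 < l) by (unfold l; rewrite <- ln_1; apply ln_increasing; lra).
  set (E := fun w => exists nu, Sset nu /\ INR M * ln nu = IZR w * l).
  assert (E0 : E 0%Z) by (exists 1; split; [apply Sset_1|rewrite ln_1; simpl; ring]).
  assert (Esub : forall a b, E a -> E b -> E (a - b)%Z).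
  { intros a b [n1 [S1 H1]] [n2 [S2 H2]]. exists (n1 * / n2). split.
    apply Sset_mul; auto; apply Sset_inv; auto.
    pose proof (Sset_pos _ S1). pose proof (Sset_pos _ S2).
    rewrite ln_mult, ln_Rinv, minus_IZR by (auto; apply Rinv_0_lt_compat; auto).
    rewrite Rmult_plus_distr_l, H1. rewrite <- Ropp_mult_distr_r, H2. ring. }
  assert (EM : E (Z.of_nat M)).
  { exists lam. split. apply (Sset_lam lam ex Hex Hxz). rewrite <- INR_IZR_INZ. auto. }
  assert (Emul : forall k, E k -> forall a, E (a * k)%Z).
  { intros k Ek a. induction a using Z.peano_ind.
    - simpl. auto.
    - replace (Z.succ a * k)%Z with (a * k - (0 - k))%Z by lia. apply Esub; auto.
    - replace (Z.pred a * k)%Z with (a * k - k)%Z by lia. apply Esub; auto. }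
  destruct (min_nat (fun n => (0 < n)%nat /\ E (Z.of_nat n)) M (conj HM EM)) as [k0 [[Hk0 Ek0] Hmin]].
  pose proof Ek0 as Ek0'.
  destruct Ek0 as [nu0 [[g [Cg Hg]] Hnu0]].
  exists g. split; auto.
  intros y Cy. destruct (QQ_slope y (proj1 Cy)) as [nu [Hnu Hy]].
  assert (Snu : Sset nu) by (exists y; auto).
  pose proof (Sset_pos _ Snu) as Hnup.
  assert (Snu0 : Sset nu0) by (exists g; auto).
  pose proof (Sset_pos _ Snu0) as Hnu0p.
  destruct (HMr nu Snu) as [w Hw].
  assert (Ew : E w) by (exists nu; auto).
  assert (Hk0z : (0 < Z.of_nat k0)%Z) by lia.
  pose proof (Z.div_mod w (Z.of_nat k0) ltac:(lia)) as Hdm.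
  pose proof (Z.mod_pos_bound w (Z.of_nat k0) Hk0z) as Hb.
  set (a := (w / Z.of_nat k0)%Z) in *. set (b := (w mod Z.of_nat k0)%Z) in *.
  assert (Eb : E b).
  { replace b with (w - a * Z.of_nat k0)%Z by lia. apply Esub; [auto|apply Emul; auto]. }
  assert (Hb0 : b = 0%Z).
  { destruct (Z.eq_dec b 0) as [|Hne]; auto. exfalso.
    apply (Hmin (Z.to_nat b)); [lia|]. split; [lia|]. rewrite Z2Nat.id by lia. auto. }
  assert (Hwa : w = (Z.of_nat k0 * a)%Z) by lia.
  assert (HMp : 0 < INR M) by (apply lt_0_INR; lia).
  assert (Hln : ln nu = IZR a * ln nu0).
  { apply (Rmult_eq_reg_l (INR M)); [|lra]. rewrite Hw.
    replace (INR M * (IZR a * ln nu0)) with (IZR a * (INR M * ln nu0)) by ring.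
    rewrite Hnu0, Hwa, mult_IZR. unfold l. ring. }
  exists a. destruct a as [|p|p]; simpl.
  - assert (nu = 1) by (apply ln_inv; auto; [lra|]; rewrite Hln, ln_1; simpl; ring). subst nu.
    apply (slope_eq y (fun t => t) 1 Cy Cx_id Hy hasSl_id).
  - intros t. apply (slope_eq y (iterF (Pos.to_nat p) g) nu Cy (Cx_iter _ g Cg) Hy).
    assert (nu = nu0 ^ Pos.to_nat p).
    { apply ln_inv; auto. apply pow_lt; auto. rewrite ln_pow by auto. rewrite Hln.
      rewrite INR_IZR_INZ, positive_nat_Z. auto. }
    rewrite H. apply hasSl_iter; auto.
  - intros t. apply (slope_eq (fun t => iterF (Pos.to_nat p) g (y t)) (fun t => t) 1
      (Cx_comp y _ Cy (Cx_iter _ g Cg)) Cx_id); [|apply hasSl_id].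
    assert (E1 : 1 = nu0 ^ Pos.to_nat p * nu).
    { apply ln_inv; [lra| apply Rmult_lt_0_compat; auto; apply pow_lt; auto|].
      rewrite ln_1, ln_mult, ln_pow by (auto; apply pow_lt; auto). rewrite Hln.
      rewrite INR_IZR_INZ, positive_nat_Z. rewrite <- Pos2Z.opp_pos, opp_IZR. ring. }
    rewrite E1. apply hasSl_comp; auto. apply hasSl_iter; auto.
Qed.

End Fin.

Lemma ML_full {St : Sett} {X : XS} lam : 1 < lam -> sLam lam -> hasSl xx lam ->
  exists g, Cx g /\ forall y, Cx y -> exists a, zpowP g y a.
Proof.
  intros H1 HL [ex [Hex Hxz]].
  destruct (bp_exists lam ex H1 Hex Hxz) as [bp [Hbp1 [Hbp2 Hbp3]]].
  assert (Hab := hab). assert (Hexl : 0 < ex) by auto.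
  assert (Hbpa : salpha < bp) by lra.
  destruct (zone_bp bp Hbpa Hbp2 Hbp3) as [lam' [e' [Hl1 [HlL [He [Heb Hxb]]]]]].
  apply (ML lam ex bp lam' e' H1 HL Hex Hxz Hbp1 Hbp2 Hbp3 Hl1 HlL He Hxb).
Qed.

Lemma comm_inv {St : Sett} x y : QQ x -> QQ y ->
  ((forall t, y (x t) = x (y t)) <-> (forall t, y (inv x t) = inv x (y t))).
Proof.
  intros Hx Hy. split; intros H t.
  - apply (QQ_inj x Hx). rewrite <- H, !inv_r; auto.
  - apply (QQ_inj (inv x) (QQ_inv x Hx)). rewrite <- H, !inv_l; auto.
Qed.

Theorem lemma4p2 (r : R) (Lam A : R -> Prop)
  (hr : 0 < r) (hLam : good_Lam Lam) (hA : good_A r Lam A)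
  (alpha beta : R)
  (halpha : 0 <= alpha <= r) (hAalpha : A alpha)
  (hbeta : 0 <= beta <= r) (hAbeta : A beta) (hab : alpha < beta)
  (x : R -> R)
  (hx : inF_S r Lam A (fun t => alpha < t < beta) x)
  (hfix : forall t, alpha < t < beta -> A t -> x t <> t) :
  exists g : R -> R,
    inF_S r Lam A (fun t => alpha < t < beta) g /\ rcomp x g = rcomp g x /\
    forall y : R -> R,
      inF_S r Lam A (fun t => alpha < t < beta) y -> rcomp x y = rcomp y x ->
      exists n : Z, is_Zpow g n y.
Proof.
  destruct hLam as [Lp [L1' [Lm [Li Ln]]]]. destruct hA as [A0' [Aa [Ao [Ar' Am]]]].
  pose (St := Build_Sett r Lam A alpha beta hr Lp L1' Lm Li Ln A0' Aa Ao Ar' Am halpha hbeta hAalpha hAbeta hab).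
  assert (Hx : @QQ St x) by exact (@F_QQ St x hx).
  assert (conv : forall f, @QQ St f -> inF_S r Lam A (fun t => alpha < t < beta) f)
    by (intros f Hf; exact (@QQ_F St f Hf)).
  assert (conv2 : forall f, inF_S r Lam A (fun t => alpha < t < beta) f -> @QQ St f)
    by (intros f Hf; exact (@F_QQ St f Hf)).
  destruct (@QQ_slope St x Hx) as [lam [HlamL Hsl]].
  pose proof (Lp lam HlamL) as Hlp.
  assert (Hlam1 : lam <> 1).
  { intro E; subst lam. destruct Hsl as [e [He H]].
    assert (Hm : alpha < Rmin (alpha + e) beta) by (apply Rmin_glb_lt; lra).
    destruct (@density St alpha (Rmin (alpha + e) beta) Hm) as [t [Ht1 Ht2]].
    assert (Hm1 := Rmin_l (alpha + e) beta). assert (Hm2 := Rmin_r (alpha + e) beta).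
    apply (hfix t); [simpl in *; lra|exact Ht1|]. simpl in H. rewrite H by lra. ring. }
  assert (Hfin : forall (X : @XS St) lam0, 1 < lam0 -> Lam lam0 -> @hasSl St xx lam0 ->
    ((forall y, @QQ St y -> ((forall t, y (x t) = x (y t)) <-> (forall t, y (xx t) = xx (y t)))) ->
    exists g : R -> R,
    inF_S r Lam A (fun t => alpha < t < beta) g /\ rcomp x g = rcomp g x /\
    forall y : R -> R,
      inF_S r Lam A (fun t => alpha < t < beta) y -> rcomp x y = rcomp y x ->
      exists n : Z, is_Zpow g n y)).
  { intros X lam0 H1 HL Hs Hc.
    destruct (@ML_full St X lam0 H1 HL Hs) as [g [[Hg Cg] Hall]].
    exists g. split; [apply conv; auto|]. split.
    - apply functional_extensionality; intro t. unfold rcomp. apply (proj2 (Hc g Hg)). exact Cg.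
    - intros y Hy Hcy. assert (HQy := conv2 y Hy).
      assert (Cy : @Cx St X y).
      { split; [exact HQy|]. exact (proj1 (Hc y HQy) (fun t => equal_f Hcy t)). }
      destruct (Hall y Cy) as [a Ha]. exists a. destruct a; simpl in *; apply functional_extensionality; auto. }
  destruct (Rlt_dec 1 lam) as [Hgt|Hle].
  - set (X := @Build_XS St x Hx hfix).
    apply (Hfin X lam Hgt HlamL Hsl). intros y Hy. simpl. tauto.
  - assert (Hlt : lam < 1) by (destruct (Req_dec lam 1); [contradiction|lra]).
    assert (Hx' := @QQ_inv St x Hx).
    assert (hfix' : forall t, @IS St t -> A t -> inv x t <> t).
    { intros t Ht HA E. apply (hfix t Ht HA). rewrite <- E at 1. apply inv_r; auto. }
    set (X := @Build_XS St (inv x) Hx' hfix').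
    apply (Hfin X (/ lam)).
    + rewrite <- Rinv_1. apply Rinv_lt_contravar; lra.
    + apply Li; auto.
    + simpl. apply hasSl_inv; auto.
    + intros y Hy. simpl. apply comm_inv; auto.
Qed.
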